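(* A geodesic metric space $X$ is asymptotically CAT(0) if and only if there exists a function $f:\mathbb{R}_+\to\mathbb{R}_+$ with $\lim_{r\to\infty} f(r)/r=0$ such that for every $r>0$, every ball of radius $r$ in $X$ is $f(r)$-CAT(0).
   Context: A metric space is asymptotically CAT(0) if all of its asymptotic cones (for all non-principal ultrafilters, all scaling sequences $a_n\to\infty$ and all base point sequences) are CAT(0). For a geodesic triangle $\triangle$ in $X$ with Euclidean comparison triangle $\bar\triangle$ (same side lengths), and $\delta\ge 0$, $\triangle$ satisfies the $\delta$-CAT(0) inequality if $d(p,q)\le d(\bar p,\bar q)+\delta$ for all $p,q\in\triangle$ with comparison points $\bar p,\bar q\in\bar\triangle$. ''A ball of radius $r$ is $\delta$-CAT(0)'' means: every geodesic triangle in $X$ whose vertices lie in that ball satisfies the $\delta$-CAT(0) inequality (balls are not assumed convex; geodesic sides may leave the ball). *)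

(* Defs.v *)
From Stdlib Require Import Reals Lra Classical ClassicalEpsilon IndefiniteDescription.
Open Scope R_scope.
Set Implicit Arguments.

Definition R2 : Type := (R * R)%type.
Definition edist (P Q : R2) : R :=
  sqrt ((fst P - fst Q) ^ 2 + (snd P - snd Q) ^ 2).
Definition lerp (P Q : R2) (u : R) : R2 :=
  (fst P + u * (fst Q - fst P), snd P + u * (snd Q - snd P)).

Definition is_metric {Y : Type} (d : Y -> Y -> R) : Prop :=
  (forall x y, 0 <= d x y) /\
  (forall x y, d x y = 0 <-> x = y) /\
  (forall x y, d x y = d y x) /\
  (forall x y z, d x z <= d x y + d y z).

Definition geodesic_seg {Y : Type} (d : Y -> Y -> R) (x y : Y) (g : R -> Y) : Prop :=
  g 0 = x /\ g (d x y) = y /\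
  forall s t, 0 <= s <= d x y -> 0 <= t <= d x y -> d (g s) (g t) = Rabs (s - t).

Definition geodesic_space {Y : Type} (d : Y -> Y -> R) : Prop :=
  is_metric d /\ forall x y : Y, exists g, geodesic_seg d x y g.

(** p = g s is a point of the side [u,v] (geodesic g) and pb is its comparison
    point on the Euclidean side [P,Q] of a comparison triangle. *)
Definition on_side {Y : Type} (d : Y -> Y -> R) (u v : Y) (g : R -> Y)
    (P Q : R2) (p : Y) (pb : R2) : Prop :=
  exists s, 0 <= s <= d u v /\ p = g s /\ pb = lerp P Q (s / d u v).

Definition on_triangle {Y : Type} (d : Y -> Y -> R) (x y z : Y)
    (g1 g2 g3 : R -> Y) (A B C : R2) (p : Y) (pb : R2) : Prop :=
  on_side d x y g1 A B p pb \/ on_side d y z g2 B C p pb \/ on_side d z x g3 C A p pb.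

(** The geodesic triangle with vertices x,y,z and sides g1 = [x,y], g2 = [y,z],
    g3 = [z,x] satisfies the delta-CAT(0) inequality (w.r.t. any, equivalently
    the, Euclidean comparison triangle ABC). *)
Definition triangle_dCAT0 {Y : Type} (d : Y -> Y -> R) (x y z : Y)
    (g1 g2 g3 : R -> Y) (delta : R) : Prop :=
  forall A B C : R2,
    edist A B = d x y -> edist B C = d y z -> edist C A = d z x ->
    forall p pb q qb,
      on_triangle d x y z g1 g2 g3 A B C p pb ->
      on_triangle d x y z g1 g2 g3 A B C q qb ->
      d p q <= edist pb qb + delta.

Definition CAT0 {Y : Type} (d : Y -> Y -> R) : Prop :=
  geodesic_space d /\
  forall x y z g1 g2 g3,
    geodesic_seg d x y g1 -> geodesic_seg d y z g2 -> geodesic_seg d z x g3 ->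
    triangle_dCAT0 d x y z g1 g2 g3 0.

Definition ball_dCAT0 {Y : Type} (d : Y -> Y -> R) (c : Y) (r delta : R) : Prop :=
  forall x y z g1 g2 g3,
    d c x <= r -> d c y <= r -> d c z <= r ->
    geodesic_seg d x y g1 -> geodesic_seg d y z g2 -> geodesic_seg d z x g3 ->
    triangle_dCAT0 d x y z g1 g2 g3 delta.

Record ultrafilter (U : (nat -> Prop) -> Prop) : Prop := {
  uf_full : U (fun _ => True);
  uf_empty : ~ U (fun _ => False);
  uf_mono : forall A B : nat -> Prop, (forall n, A n -> B n) -> U A -> U B;
  uf_inter : forall A B : nat -> Prop, U A -> U B -> U (fun n => A n /\ B n);
  uf_ultra : forall A : nat -> Prop, U A \/ U (fun n => ~ A n) }.

Definition nonprincipal (U : (nat -> Prop) -> Prop) : Prop :=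
  forall m : nat, ~ U (fun n => n = m).

Definition is_ulim (U : (nat -> Prop) -> Prop) (u : nat -> R) (l : R) : Prop :=
  forall eps, 0 < eps -> U (fun n => Rabs (u n - l) < eps).

Definition ulim (U : (nat -> Prop) -> Prop) (u : nat -> R) : R :=
  epsilon (inhabits 0) (is_ulim U u).

Definition tends_to_infinity (a : nat -> R) : Prop :=
  forall M, exists N, forall n, (N <= n)%nat -> M <= a n.

Section Cone.
Variables (X : Type) (d : X -> X -> R) (U : (nat -> Prop) -> Prop)
          (a : nat -> R) (e : nat -> X).

Definition cone_admissible (x : nat -> X) : Prop :=
  exists K, U (fun n => d (x n) (e n) <= K * a n).

Definition ConeSeq : Type := { x : nat -> X | cone_admissible x }.

Definition cone_pdist (x y : ConeSeq) : R :=
  ulim U (fun n => d (proj1_sig x n) (proj1_sig y n) / a n).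

(** points of the cone: equivalence classes for cone_pdist x y = 0 *)
Definition ConePt : Type :=
  { P : ConeSeq -> Prop | exists x, forall y, P y <-> cone_pdist x y = 0 }.

Definition cone_rep (P : ConePt) : ConeSeq :=
  proj1_sig (constructive_indefinite_description _ (proj2_sig P)).

Definition cone_dist (P Q : ConePt) : R := cone_pdist (cone_rep P) (cone_rep Q).
End Cone.

Definition asymp_CAT0 {X : Type} (d : X -> X -> R) : Prop :=
  forall U, ultrafilter U -> nonprincipal U ->
  forall a : nat -> R, tends_to_infinity a ->
  forall e : nat -> X, CAT0 (@cone_dist X d U a e).

(* Submission.v *)
Require Import Defs.
From Stdlib Require Import Reals Lra Lia Classical ClassicalEpsilon FunctionalExtensionality PropExtensionality ProofIrrelevance.
Open Scope R_scope.

Lemma Rabs_le_between x M : Rabs x <= M -> -M <= x <= M.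
Proof. unfold Rabs; destruct (Rcase_abs x); lra. Qed.

Section UF.
Variable U : (nat -> Prop) -> Prop.
Hypothesis HU : ultrafilter U.

Lemma U_mono A B : (forall n, A n -> B n) -> U A -> U B.
Proof. apply (uf_mono HU). Qed.
Lemma U_inter A B : U A -> U B -> U (fun n => A n /\ B n).
Proof. apply (uf_inter HU). Qed.
Lemma U_ex A : U A -> exists n, A n.
Proof.
  intros H. apply NNPP; intro Hn. apply (uf_empty HU).
  apply (U_mono A); auto. intros n Hn'. apply Hn. eauto.
Qed.
Lemma U_true (A : nat -> Prop) : (forall n, A n) -> U A.
Proof. intros H. apply (U_mono (fun _ => True)); auto. apply (uf_full HU). Qed.
Lemma U_inter3 A B C : U A -> U B -> U C -> U (fun n => A n /\ B n /\ C n).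
Proof. intros. apply U_inter; auto. apply U_inter; auto. Qed.
Lemma U_or A B : U (fun n => A n \/ B n) -> U A \/ U B.
Proof.
  intros H. destruct (uf_ultra HU A) as [|HA]; auto.
  destruct (uf_ultra HU B) as [|HB]; auto.
  exfalso. destruct (U_ex _ (U_inter _ _ H (U_inter _ _ HA HB))) as [n [[?|?] [? ?]]]; tauto.
Qed.

Definition is_ulim' := is_ulim U.

Lemma is_ulim_unique u l m : is_ulim U u l -> is_ulim U u m -> l = m.
Proof.
  intros H1 H2. apply NNPP; intro Hne.
  assert (He : 0 < Rabs (l - m) / 2).
  { assert (0 < Rabs (l - m)) by (apply Rabs_pos_lt; lra). lra. }
  destruct (U_ex _ (U_inter _ _ (H1 _ He) (H2 _ He))) as [n [Ha Hb]].
  assert (Rabs (l - m) <= Rabs (u n - l) + Rabs (u n - m)).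
  { replace (l - m) with (-(u n - l) + (u n - m)) by ring.
    eapply Rle_trans. apply Rabs_triang. rewrite Rabs_Ropp. lra. }
  lra.
Qed.

Lemma ulim_eq u l : is_ulim U u l -> ulim U u = l.
Proof.
  intros H. unfold ulim.
  assert (Hs : is_ulim U u (epsilon (inhabits 0) (is_ulim U u))).
  { apply epsilon_spec. eauto. }
  eapply is_ulim_unique; eauto.
Qed.

Lemma ulim_exists u M : U (fun n => Rabs (u n) <= M) -> exists l, is_ulim U u l.
Proof.
  intros HM.
  set (S := fun t => U (fun n => t <= u n)).
  assert (Hb : bound S).
  { exists (M + 1). intros t Ht. unfold S in Ht.
    destruct (Rle_dec t (M+1)) as [|Hn]; auto. exfalso.
    destruct (U_ex _ (U_inter _ _ Ht HM)) as [n [H1 H2]].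
    apply Rabs_le_between in H2. lra. }
  assert (Hne : exists t, S t).
  { exists (-M). unfold S. exact (U_mono _ _ (fun n H => proj1 (Rabs_le_between _ _ H)) HM). }
  destruct (completeness S Hb Hne) as [l [Hub Hlub]].
  exists l. intros eps Heps.
  assert (H1 : U (fun n => l - eps < u n)).
  { apply NNPP; intro Hn.
    assert (Hup : is_upper_bound S (l - eps / 2)).
    { intros t Ht. destruct (Rle_dec t (l - eps/2)) as [|Hlt]; auto. exfalso.
      apply Hn. apply (U_mono (fun n => t <= u n)); auto. intros n H. lra. }
    specialize (Hlub _ Hup). lra. }
  assert (H2 : U (fun n => u n < l + eps)).
  { destruct (uf_ultra HU (fun n => u n < l + eps)) as [|Hn]; auto.
    exfalso. assert (S (l + eps)).
    { unfold S. apply (U_mono _ _ (fun n H => Rnot_lt_le _ _ H) Hn). }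
    specialize (Hub _ H). lra. }
  eapply U_mono; [|exact (U_inter _ _ H1 H2)]. intros n [Ha1 Hb1]. apply Rabs_def1; lra.
Qed.

Lemma ulim_spec u M : U (fun n => Rabs (u n) <= M) -> is_ulim U u (ulim U u).
Proof.
  intros H. destruct (ulim_exists u M H) as [l Hl]. rewrite (ulim_eq _ _ Hl). auto.
Qed.

Lemma is_ulim_ext u v l : U (fun n => u n = v n) -> is_ulim U u l -> is_ulim U v l.
Proof.
  intros He H eps Heps. eapply U_mono; [|exact (U_inter _ _ He (H _ Heps))].
  intros n [H1 H2]. rewrite <- H1; exact H2.
Qed.

Lemma is_ulim_const c : is_ulim U (fun _ => c) c.
Proof. intros eps He. apply U_true. intros n. rewrite Rminus_diag, Rabs_R0. auto. Qed.

Lemma is_ulim_plus u v l m : is_ulim U u l -> is_ulim U v m -> is_ulim U (fun n => u n + v n) (l + m).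
Proof.
  intros H1 H2 eps He.
  assert (He2 : 0 < eps / 2) by lra.
  eapply U_mono; [|exact (U_inter _ _ (H1 _ He2) (H2 _ He2))]. intros n [Ha Hb].
  replace (u n + v n - (l + m)) with ((u n - l) + (v n - m)) by ring.
  eapply Rle_lt_trans; [apply Rabs_triang| lra].
Qed.

Lemma is_ulim_opp u l : is_ulim U u l -> is_ulim U (fun n => - u n) (- l).
Proof.
  intros H eps He. eapply U_mono; [|exact (H _ He)]. intros n Hn.
  replace (- u n - - l) with (-(u n - l)) by ring; rewrite Rabs_Ropp; exact Hn.
Qed.

Lemma is_ulim_minus u v l m : is_ulim U u l -> is_ulim U v m -> is_ulim U (fun n => u n - v n) (l - m).
Proof. intros. apply is_ulim_plus; auto. apply is_ulim_opp; auto. Qed.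

Lemma is_ulim_bound u l : is_ulim U u l -> U (fun n => Rabs (u n) <= Rabs l + 1).
Proof.
  intros H. eapply U_mono; [|exact (H 1 Rlt_0_1)]. intros n Hn.
  assert (Rabs (u n) <= Rabs (u n - l) + Rabs l) by
      (replace (u n) with ((u n - l) + l) at 1 by ring; apply Rabs_triang); lra.
Qed.

Lemma is_ulim_mult u v l m : is_ulim U u l -> is_ulim U v m -> is_ulim U (fun n => u n * v n) (l * m).
Proof.
  intros H1 H2 eps He.
  set (K := Rabs m + 1).
  assert (HK : 0 < K) by (unfold K; pose proof (Rabs_pos m); lra).
  set (e1 := eps / (2 * K)). set (e2 := eps / (2 * (Rabs l + 1))).
  assert (He1 : 0 < e1) by (unfold e1; apply Rdiv_lt_0_compat; lra).
  assert (Hl : 0 < Rabs l + 1) by (pose proof (Rabs_pos l); lra).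
  assert (He2 : 0 < e2) by (unfold e2; apply Rdiv_lt_0_compat; lra).
  eapply U_mono; [|exact (U_inter _ _ (U_inter _ _ (H1 _ He1) (H2 _ He2)) (is_ulim_bound _ _ H2))].
  intros n [[Ha Hb] Hc].
  replace (u n * v n - l * m) with ((u n - l) * v n + l * (v n - m)) by ring.
  eapply Rle_lt_trans. apply Rabs_triang. rewrite !Rabs_mult.
  assert (Rabs (u n - l) * Rabs (v n) < e1 * K).
  { apply Rle_lt_trans with (Rabs (u n - l) * K).
    apply Rmult_le_compat_l; auto using Rabs_pos. apply Rmult_lt_compat_r; auto. }
  assert (Rabs l * Rabs (v n - m) <= (Rabs l + 1) * e2).
  { apply Rmult_le_compat; auto using Rabs_pos; lra. }
  assert (e1 * K = eps / 2) by (unfold e1; field; lra).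
  assert ((Rabs l + 1) * e2 = eps / 2) by (unfold e2; field; lra).
  lra.
Qed.

Lemma is_ulim_le u v l m : U (fun n => u n <= v n) -> is_ulim U u l -> is_ulim U v m -> l <= m.
Proof.
  intros Hle H1 H2. destruct (Rle_dec l m) as [|Hn]; auto. exfalso.
  assert (He : 0 < (l - m) / 2) by lra.
  destruct (U_ex _ (U_inter3 _ _ _ Hle (H1 _ He) (H2 _ He))) as [n [Ha [Hb Hc]]].
  apply Rabs_def2 in Hb. apply Rabs_def2 in Hc. lra.
Qed.

Lemma is_ulim_cont (f : R -> R) u l : continuity_pt f l -> is_ulim U u l -> is_ulim U (fun n => f (u n)) (f l).
Proof.
  intros Hc H eps He. destruct (Hc eps He) as [alp [Ha Hf]].
  eapply U_mono; [|exact (H _ Ha)]. intros n Hn. destruct (Req_dec (u n) l) as [E|E].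
  - rewrite E, Rminus_diag, Rabs_R0. auto.
  - apply (Hf (u n)). split. split. exact I. auto. simpl. unfold R_dist. auto.
Qed.

Lemma is_ulim_sqrt u l : is_ulim U u l -> is_ulim U (fun n => sqrt (u n)) (sqrt l).
Proof.
  intros H. destruct (Rlt_le_dec 0 l).
  - apply is_ulim_cont; auto. apply continuity_pt_sqrt. lra.
  -
    intros eps He.
    eapply U_mono; [|exact (H (eps * eps) ltac:(nra))]. intros n Hn. rewrite (sqrt_neg_0 l) by lra. rewrite Rminus_0_r.
    rewrite Rabs_right by (apply Rle_ge, sqrt_pos).
    destruct (Rle_dec (u n) 0). rewrite sqrt_neg_0; auto.
    apply Rabs_def2 in Hn. rewrite <- (sqrt_Rsqr eps) by lra.
    apply sqrt_lt_1_alt. unfold Rsqr. split; lra.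
Qed.

Lemma is_ulim_abs u l : is_ulim U u l -> is_ulim U (fun n => Rabs (u n)) (Rabs l).
Proof. intros. apply is_ulim_cont; auto. apply Rcontinuity_abs. Qed.

Lemma is_ulim_min u v l m : is_ulim U u l -> is_ulim U v m -> is_ulim U (fun n => Rmin (u n) (v n)) (Rmin l m).
Proof.
  intros H1 H2. 
  assert (E : forall x y, Rmin x y = (x + y - Rabs (x - y)) / 2).
  { intros x y. unfold Rmin. destruct (Rle_dec x y); [rewrite Rabs_left1|rewrite Rabs_right]; lra. }
  apply (is_ulim_ext (fun n => (u n + v n - Rabs (u n - v n)) * / 2)).
  { apply U_true. intros. rewrite E. reflexivity. }
  rewrite E. apply is_ulim_mult; [|apply is_ulim_const].
  apply is_ulim_minus. apply is_ulim_plus; auto. apply is_ulim_abs, is_ulim_minus; auto.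
Qed.

Lemma is_ulim_max u v l m : is_ulim U u l -> is_ulim U v m -> is_ulim U (fun n => Rmax (u n) (v n)) (Rmax l m).
Proof.
  intros H1 H2. 
  assert (E : forall x y, Rmax x y = (x + y + Rabs (x - y)) / 2).
  { intros x y. unfold Rmax. destruct (Rle_dec x y); [rewrite Rabs_left1|rewrite Rabs_right]; lra. }
  apply (is_ulim_ext (fun n => (u n + v n + Rabs (u n - v n)) * / 2)).
  { apply U_true. intros. rewrite E. reflexivity. }
  rewrite E. apply is_ulim_mult; [|apply is_ulim_const].
  apply is_ulim_plus. apply is_ulim_plus; auto. apply is_ulim_abs, is_ulim_minus; auto.
Qed.

Hypothesis HNP : nonprincipal U.

Lemma U_ev N : U (fun n => (N <= n)%nat).
Proof.
  induction N.
  - apply U_true. intros; lia.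
  - assert (Ho : U (fun n => n = N \/ (S N <= n)%nat)).
    { eapply U_mono; [|exact IHN]. intros n Hn. idtac. Fail lia. simpl in *. lia. }
    destruct (U_or _ _ Ho) as [H|H]; auto.
    exfalso. apply (HNP N H).
Qed.

Lemma U_tends a : tends_to_infinity a -> forall M, U (fun n => M <= a n).
Proof.
  intros Ha M. destruct (Ha M) as [N HN]. apply (U_mono _ _ (fun n H => HN n H) (U_ev N)).
Qed.

End UF.

Definition setF := (nat -> Prop) -> Prop.
Definition isF (F : setF) : Prop :=
  F (fun _ => True) /\ ~ F (fun _ => False) /\
  (forall A B : nat -> Prop, (forall n, A n -> B n) -> F A -> F B) /\
  (forall A B, F A -> F B -> F (fun n => A n /\ B n)) /\
  (forall N, F (fun n => (N <= n)%nat)).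
Definition subF (F G : setF) := forall A, F A -> G A.
Definition ssubF (F G : setF) := subF F G /\ exists A, G A /\ ~ F A.

Definition succF (F : setF) : setF :=
  match excluded_middle_informative (exists G, isF G /\ ssubF F G) with
  | left H => proj1_sig (constructive_indefinite_description _ H)
  | right _ => F end.

Lemma succF_isF F : isF F -> isF (succF F).
Proof.
  intros H. unfold succF. destruct excluded_middle_informative as [e|]; auto.
  destruct (constructive_indefinite_description _ e) as [G HG]; simpl; apply HG.
Qed.
Lemma succF_sub F : subF F (succF F).
Proof.
  unfold succF. destruct excluded_middle_informative as [e|]; [|intros A; auto].
  destruct (constructive_indefinite_description _ e) as [G HG]; simpl; apply HG.
Qed.
Lemma succF_ssub F : (exists G, isF G /\ ssubF F G) -> ssubF F (succF F).
Proof.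
  intros H. unfold succF. destruct excluded_middle_informative as [e|]; [|tauto].
  destruct (constructive_indefinite_description _ e) as [G HG]; simpl; apply HG.
Qed.

Lemma subF_ext F G : subF F G -> subF G F -> F = G.
Proof.
  intros H1 H2. apply functional_extensionality. intros A.
  apply propositional_extensionality. split; auto.
Qed.

Definition Fam := setF -> Prop.
Definition chainF (C : Fam) := forall x y, C x -> C y -> subF x y \/ subF y x.
Definition unionF (C : Fam) : setF := fun A => exists x, C x /\ x A.
Definition baseF : setF := fun A => exists N, forall n, (N <= n)%nat -> A n.

Definition tower (T : Fam) : Prop :=
  T baseF /\ (forall x, T x -> T (succF x)) /\
  (forall C : Fam, (exists x, C x) -> (forall x, C x -> T x) -> chainF C -> T (unionF C)).

Definition T0 : Fam := fun x => forall T, tower T -> T x.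

Lemma T0_tower : tower T0.
Proof.
  split; [|split].
  - intros T HT. apply HT.
  - intros x Hx T HT. apply HT. apply Hx; auto.
  - intros C Hne HC Hch T HT. apply HT; auto. intros x Hx. apply HC; auto.
Qed.

Lemma T0_ind (P : setF -> Prop) :
  P baseF -> (forall x, T0 x -> P x -> P (succF x)) ->
  (forall C : Fam, (exists x, C x) -> (forall x, C x -> T0 x /\ P x) -> chainF C -> P (unionF C)) ->
  forall x, T0 x -> P x.
Proof.
  intros Hb Hs Hu x Hx.
  assert (HT : tower (fun x => T0 x /\ P x)).
  { split; [|split].
    - split; auto. apply T0_tower.
    - intros y [Hy1 Hy2]. split; auto. apply T0_tower; auto.
    - intros C Hne HC Hch. split. apply T0_tower; auto. intros y Hy; apply HC; auto.
      apply Hu; auto. }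
  apply (Hx _ HT).
Qed.

Lemma baseF_isF : isF baseF.
Proof.
  split; [|split; [|split; [|split]]].
  - exists 0%nat; auto.
  - intros [N HN]. apply (HN N). lia.
  - intros A B HAB [N HN]. exists N. auto.
  - intros A B [N HN] [M HM]. exists (Nat.max N M). intros n Hn. split; [apply HN|apply HM]; lia.
  - intros N. exists N. auto.
Qed.

Lemma union_isF C : (exists x, C x) -> (forall x, C x -> isF x) -> chainF C -> isF (unionF C).
Proof.
  intros [x0 Hx0] HC Hch.
  split; [|split; [|split; [|split]]].
  - exists x0. split; auto. apply HC; auto.
  - intros [x [Hx Hf]]. apply (HC x Hx). auto.
  - intros A B HAB [x [Hx HA]]. exists x. split; auto. apply (HC x Hx) with A; auto.
  - intros A B [x [Hx HA]] [y [Hy HB]].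
    destruct (Hch x y Hx Hy) as [Hxy|Hyx].
    + exists y. split; auto. apply (HC y Hy); auto.
    + exists x. split; auto. apply (HC x Hx); auto.
  - intros N. exists x0. split; auto. apply HC; auto.
Qed.

Lemma T0_isF x : T0 x -> isF x.
Proof.
  apply T0_ind.
  - apply baseF_isF.
  - intros y _ H. apply succF_isF; auto.
  - intros C Hne HC Hch. apply union_isF; auto. intros y Hy. apply HC; auto.
Qed.

Lemma T0_base x : T0 x -> subF baseF x.
Proof.
  apply T0_ind.
  - intros A; auto.
  - intros y _ H A HA. apply succF_sub. auto.
  - intros C [x0 Hx0] HC Hch A HA. exists x0. split; auto. apply HC; auto.
Qed.

Definition extreme (c : setF) := T0 c /\ forall x, T0 x -> ssubF x c -> subF (succF x) c.

Lemma extreme_M c : extreme c -> forall x, T0 x -> subF x c \/ subF (succF c) x.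
Proof.
  intros [Hc Hext]. apply T0_ind.
  - left. apply T0_base; auto.
  - intros x Hx [H|H].
    + destruct (classic (subF c x)) as [H'|H'].
      * rewrite (subF_ext _ _ H H'). right. intros A; auto.
      * left. apply Hext; auto. split; auto. apply NNPP; intro Hn. apply H'.
        intros A HA. apply NNPP; intro HxA. apply Hn. eauto.
    + right. intros A HA. apply succF_sub; auto.
  - intros C Hne HC Hch.
    destruct (classic (forall x, C x -> subF x c)) as [H|H].
    + left. intros A [x [Hx HA]]. apply (H x Hx); auto.
    + right. apply not_all_ex_not in H. destruct H as [x Hx].
      apply imply_to_and in Hx. destruct Hx as [Hx Hn].
      destruct (proj2 (HC x Hx)) as [|H]; [tauto|].
      intros A HA. exists x. split; auto.
Qed.

Lemma T0_extreme : forall c, T0 c -> extreme c.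
Proof.
  apply T0_ind.
  - split. apply T0_tower. intros x Hx [Hs [A [HA HnA]]]. exfalso. apply HnA. apply T0_base; auto.
  - intros c Hc Hec. split. apply T0_tower; auto.
    intros x Hx [Hs [A [HA HnA]]].
    destruct (extreme_M c Hec x Hx) as [H|H].
    + destruct (classic (subF c x)) as [H'|H'].
      * rewrite (subF_ext _ _ H H'). intros B; auto.
      * assert (ssubF x c).
        { split; auto. apply NNPP; intro Hn. apply H'.
          intros B HB. apply NNPP; intro HxB. apply Hn. eauto. }
        intros B HB. apply succF_sub. apply (proj2 Hec x Hx H0). auto.
    + exfalso. apply HnA. apply H. auto.
  - intros C Hne HC Hch. split.
    + apply T0_tower; auto. intros y Hy; apply HC; auto.
    + intros x Hx [Hs [A [[c [Hc HcA]] HnA]]].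
      destruct (HC c Hc) as [HTc Hec].
      destruct (extreme_M c Hec x Hx) as [H|H].
      * intros B HB. exists c. split; auto. apply (proj2 Hec x Hx); auto.
        split; auto. exists A; auto.
      * exfalso. apply HnA. apply H. apply succF_sub. auto.
Qed.

Lemma T0_chain : chainF T0.
Proof.
  intros x y Hx Hy. destruct (extreme_M y (T0_extreme y Hy) x Hx) as [H|H]; auto.
  right. intros A HA. apply H. apply succF_sub; auto.
Qed.

Lemma exists_max_filter : exists M, isF M /\ forall G, isF G -> subF M G -> subF G M.
Proof.
  set (M := unionF T0).
  assert (HM : T0 M).
  { apply T0_tower. exists baseF. apply T0_tower. intros x Hx; exact Hx. apply T0_chain. }
  exists M. split. apply T0_isF; auto.
  intros G HG HMG A HA. apply NNPP; intro HnA.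
  assert (Hs : ssubF M (succF M)).
  { apply succF_ssub. exists G. split; auto. split; auto. exists A; auto. }
  destruct Hs as [_ [B [HB HnB]]]. apply HnB.
  exists (succF M). split; auto. apply (proj1 (proj2 T0_tower)); auto.
Qed.

Lemma exists_ultrafilter : exists U, ultrafilter U /\ nonprincipal U.
Proof.
  destruct exists_max_filter as [M [[H1 [H2 [H3 [H4 H5]]]] Hmax]].
  exists M. split.
  - constructor; auto.
    intros A. destruct (classic (M (fun n => ~ A n))) as [|Hn]; auto. left.
    set (G := fun B : nat -> Prop => exists C, M C /\ forall n, C n -> A n -> B n).
    assert (HG : isF G).
    { split; [|split; [|split; [|split]]].
      - exists (fun _ => True). split; auto.
      - intros [C [HC HCB]]. apply Hn. apply (H3 C); auto.
      - intros B B' HBB' [C [HC HCB]]. exists C. split; auto.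
      - intros B B' [C [HC HCB]] [C' [HC' HCB']]. exists (fun n => C n /\ C' n). split; auto.
        intros n [? ?] ?. split; auto.
      - intros N. exists (fun n => (N <= n)%nat). split; auto. }
    apply (Hmax G HG).
    + intros C HC. exists C. split; auto.
    + exists (fun _ => True). split; auto.
  - intros m Hm. apply H2. apply (H3 (fun n => n = m /\ (S m <= n)%nat)).
    + intros n [-> Hn]. lia.
    + apply H4; auto.
Qed.

Definition nxt (k : nat) : nat := match k with 0 => 1 | 1 => 2 | _ => 0 end%nat.
Definition sel {T : Type} (k : nat) (x y z : T) : T :=
  match k with O => x | S O => y | _ => z end.
Definition wt (k : nat) (l : R) : R * R * R :=
  match k with O => (1 - l, l, 0) | S O => (0, 1 - l, l) | _ => (l, 0, 1 - l) end.
Definition Eform (g : R * R * R) (c a b : R) : R :=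
  let '(g0, g1, g2) := g in - (g0 * g1 * c ^ 2 + g1 * g2 * a ^ 2 + g2 * g0 * b ^ 2).
Definition Ef (k : nat) (l : R) (j : nat) (m : R) (c a b : R) : R :=
  let '(u0, u1, u2) := wt k l in let '(v0, v1, v2) := wt j m in
  Eform (u0 - v0, u1 - v1, u2 - v2) c a b.

Lemma edist_sq P Q : edist P Q ^ 2 = (fst P - fst Q) ^ 2 + (snd P - snd Q) ^ 2.
Proof. unfold edist. rewrite pow2_sqrt; auto. apply Rplus_le_le_0_compat; apply pow2_ge_0. Qed.

Lemma edist_pos P Q : 0 <= edist P Q.
Proof. apply sqrt_pos. Qed.

Lemma euclid_ident A B C k l j m :
  edist (lerp (sel k A B C) (sel (nxt k) A B C) l) (lerp (sel j A B C) (sel (nxt j) A B C) m) ^ 2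
  = Ef k l j m (edist A B) (edist B C) (edist C A).
Proof.
  rewrite !edist_sq. destruct A as [a1 a2], B as [b1 b2], C as [c1 c2].
  destruct k as [|[|k]]; destruct j as [|[|j]];
  unfold Ef, Eform, wt, sel, nxt, lerp; cbn [fst snd]; rewrite !edist_sq; cbn [fst snd]; ring.
Qed.

Lemma euclid_dist A B C k l j m :
  edist (lerp (sel k A B C) (sel (nxt k) A B C) l) (lerp (sel j A B C) (sel (nxt j) A B C) m)
  = sqrt (Ef k l j m (edist A B) (edist B C) (edist C A)).
Proof.
  rewrite <- euclid_ident. rewrite sqrt_pow2; auto. apply edist_pos.
Qed.


Lemma tri_exists a b c : 0 <= a -> 0 <= b -> 0 <= c ->
  c <= a + b -> a <= b + c -> b <= c + a ->
  exists A B C, edist A B = c /\ edist B C = a /\ edist C A = b.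
Proof.
  intros Ha Hb Hc H1 H2 H3.
  destruct (Req_dec c 0) as [E|E].
  - exists (0,0), (0,0), (b,0). subst c. unfold edist; cbn [fst snd].
    assert (a = b) by lra. subst.
    repeat split; [replace ((0-0)^2 + (0-0)^2) with 0 by ring; apply sqrt_0| |];
    [replace ((0-b)^2 + (0-0)^2) with (b^2) by ring | replace ((b-0)^2 + (0-0)^2) with (b^2) by ring];
    apply sqrt_pow2; auto.
  - set (x := (b^2 + c^2 - a^2) / (2 * c)).
    assert (Hx : x ^ 2 <= b ^ 2).
    { assert (Hc0 : 0 < c) by lra.
      assert (Hxc : 2 * c * x = b^2 + c^2 - a^2) by (unfold x; field; lra).
      assert (F1 : 0 <= 2*b*c - (b^2 + c^2 - a^2)).
      { replace (2*b*c - (b^2 + c^2 - a^2)) with ((a - b + c) * (a + b - c)) by ring.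
        apply Rmult_le_pos; lra. }
      assert (F2 : 0 <= 2*b*c + (b^2 + c^2 - a^2)).
      { replace (2*b*c + (b^2 + c^2 - a^2)) with ((b + c - a) * (b + c + a)) by ring.
        apply Rmult_le_pos; lra. }
      assert (F3 : (2*c*x)^2 <= (2*b*c)^2).
      { rewrite Hxc. assert (0 <= (2*b*c - (b^2 + c^2 - a^2)) * (2*b*c + (b^2 + c^2 - a^2)))
          by (apply Rmult_le_pos; auto). nra. }
      assert (F4 : 0 < (2*c)^2) by nra.
      replace ((2*c*x)^2) with ((2*c)^2 * x^2) in F3 by ring.
      replace ((2*b*c)^2) with ((2*c)^2 * b^2) in F3 by ring.
      apply Rmult_le_reg_l with ((2*c)^2); auto. }
    set (y := sqrt (b ^ 2 - x ^ 2)).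
    assert (Hy : y ^ 2 = b ^ 2 - x ^ 2) by (unfold y; apply pow2_sqrt; lra).
    assert (Hxc : 2 * c * x = b^2 + c^2 - a^2) by (unfold x; field; lra).
    exists (0,0), (c,0), (x,y). unfold edist; cbn [fst snd]. repeat split.
    + replace ((0-c)^2 + (0-0)^2) with (c^2) by ring. apply sqrt_pow2; auto.
    + replace ((c-x)^2 + (0-y)^2) with (a^2) by nra. apply sqrt_pow2; auto.
    + replace ((x-0)^2 + (y-0)^2) with (b^2) by nra. apply sqrt_pow2; auto.
Qed.

Section MetricFacts.
Variables (X : Type) (d : X -> X -> R) (Hm : is_metric d).
Lemma dpos x y : 0 <= d x y. Proof. apply Hm. Qed.
Lemma dself x : d x x = 0. Proof. apply Hm. auto. Qed.
Lemma dsym x y : d x y = d y x. Proof. apply Hm. Qed.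
Lemma dtri x y z : d x z <= d x y + d y z. Proof. apply Hm. Qed.
Lemma dzero x y : d x y = 0 -> x = y. Proof. apply Hm. Qed.

Lemma geo_param x y g s : geodesic_seg d x y g -> 0 <= s <= d x y -> d (g s) x = s.
Proof.
  intros [H0 [H1 H2]] Hs. rewrite <- H0 at 1. rewrite H2; auto.
  rewrite Rminus_0_r, Rabs_right; lra. split; [lra| apply dpos].
Qed.
Lemma geo_param2 x y g s : geodesic_seg d x y g -> 0 <= s <= d x y -> d (g s) y = d x y - s.
Proof.
  intros [H0 [H1 H2]] Hs. rewrite <- H1 at 1. rewrite H2; auto.
  rewrite Rabs_left1; lra. split; [apply dpos| lra].
Qed.
Lemma geo_dist x y g s t : geodesic_seg d x y g -> 0 <= s <= d x y -> 0 <= t <= d x y ->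
  d (g s) (g t) = Rabs (s - t).
Proof. intros [_ [_ H]] ? ?. auto. Qed.
End MetricFacts.

Lemma clamp_scale t D al : 0 < al -> Rmin (Rmax 0 (t * al)) D / al = Rmin (Rmax 0 t) (D / al).
Proof.
  intros Hal. unfold Rmin, Rmax.
  destruct (Rle_dec 0 (t * al)) as [H1|H1]; destruct (Rle_dec 0 t) as [H2|H2].
  - destruct (Rle_dec (t * al) D) as [H3|H3]; destruct (Rle_dec t (D / al)) as [H4|H4].
    + field. lra.
    + exfalso. apply H4. apply Rmult_le_reg_r with al; auto. unfold Rdiv. rewrite Rmult_assoc, Rinv_l; lra.
    + exfalso. apply H3. apply Rmult_le_reg_r with (/ al). apply Rinv_0_lt_compat; auto.
      rewrite Rmult_assoc, Rinv_r; lra.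
    + reflexivity.
  - exfalso. apply H2. nra.
  - exfalso. apply H1. nra.
  - destruct (Rle_dec 0 D) as [H3|H3]; destruct (Rle_dec 0 (D / al)) as [H4|H4].
    + unfold Rdiv; ring.
    + exfalso. apply H4. unfold Rdiv. apply Rmult_le_pos; auto. left; apply Rinv_0_lt_compat; auto.
    + exfalso. apply H3. apply Rmult_le_reg_r with (/ al). apply Rinv_0_lt_compat; auto.
      rewrite Rmult_0_l. auto.
    + reflexivity.
Qed.

Section Cone2.
Variables (X : Type) (d : X -> X -> R) (U : (nat -> Prop) -> Prop) (a : nat -> R) (e : nat -> X).
Hypotheses (Hm : is_metric d) (HU : ultrafilter U) (HNP : nonprincipal U) (Ha : tends_to_infinity a).

Notation adm := (cone_admissible d U a e).
Notation CP := (ConePt d U a e).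
Notation CS := (ConeSeq d U a e).

Lemma Ua1 : U (fun n => 1 <= a n).
Proof. apply (U_tends U HU HNP a Ha 1). Qed.

Lemma adm_bound u : adm u -> exists K, 0 <= K /\ U (fun n => 1 <= a n /\ d (u n) (e n) <= K * a n).
Proof.
  intros [K HK]. exists (Rmax K 0). split. apply Rmax_r.
  eapply (U_mono U HU); [|exact (U_inter U HU _ _ Ua1 HK)]. intros n [H1 H2]. split; auto.
  eapply Rle_trans; eauto. apply Rmult_le_compat_r. lra. apply Rmax_l.
Qed.

Lemma adm_e : adm e.
Proof. exists 0. apply U_true; auto. intros n. rewrite (dself X d Hm); auto. lra. Qed.

Lemma adm_near u v : adm u -> (exists K, U (fun n => d (v n) (u n) <= K * a n)) -> adm v.
Proof.
  intros Hu [K HK]. destruct (adm_bound u Hu) as [K' [HK' HU']].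
  exists (K + K'). eapply (U_mono U HU); [|exact (U_inter U HU _ _ HK HU')].
  intros n [H1 [H2 H3]]. eapply Rle_trans. apply (dtri X d Hm _ (u n)). lra.
Qed.

Lemma adm_dd u v : adm u -> adm v -> exists M, 0 <= M /\ U (fun n => 1 <= a n /\ d (u n) (v n) <= M * a n).
Proof.
  intros Hu Hv. destruct (adm_bound u Hu) as [K [HK H1]]. destruct (adm_bound v Hv) as [K' [HK' H2]].
  exists (K + K'). split. lra. eapply (U_mono U HU); [|exact (U_inter U HU _ _ H1 H2)].
  intros n [[H3 H4] [_ H5]]. split; auto. eapply Rle_trans. apply (dtri X d Hm _ (e n)).
  rewrite (dsym X d Hm (e n)). lra.
Qed.

Definition rpd (u v : nat -> X) : R := ulim U (fun n => d (u n) (v n) / a n).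

Lemma rpd_lim u v : adm u -> adm v -> is_ulim U (fun n => d (u n) (v n) / a n) (rpd u v).
Proof.
  intros Hu Hv. destruct (adm_dd u v Hu Hv) as [M [HM H]]. apply (ulim_spec U HU _ M).
  eapply (U_mono U HU); [|exact H]. intros n [H1 H2].
  rewrite Rabs_right. apply Rmult_le_reg_r with (a n). lra.
  unfold Rdiv. rewrite Rmult_assoc, Rinv_l by lra. lra.
  apply Rle_ge. unfold Rdiv. apply Rmult_le_pos. apply dpos; auto. left; apply Rinv_0_lt_compat; lra.
Qed.

Lemma rpd_nonneg u v : adm u -> adm v -> 0 <= rpd u v.
Proof.
  intros Hu Hv. apply (is_ulim_le U HU (fun _ => 0) (fun n => d (u n) (v n) / a n)).
  - eapply (U_mono U HU); [|exact Ua1]. intros n Hn. unfold Rdiv. apply Rmult_le_pos. apply dpos; auto.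
    left; apply Rinv_0_lt_compat; lra.
  - apply (is_ulim_const U HU).
  - apply rpd_lim; auto.
Qed.

Lemma rpd_zero_lim u v : is_ulim U (fun n => d (u n) (v n) / a n) 0 -> rpd u v = 0.
Proof. intros H. apply (ulim_eq U HU); auto. Qed.

Lemma rpd_self u : rpd u u = 0.
Proof.
  apply rpd_zero_lim. apply (is_ulim_ext U HU (fun _ => 0)). apply U_true; auto. intros n.
  rewrite (dself X d Hm); auto. unfold Rdiv; ring. apply (is_ulim_const U HU).
Qed.

Lemma rpd_sym u v : rpd u v = rpd v u.
Proof. unfold rpd. f_equal. apply functional_extensionality. intros n. rewrite (dsym X d Hm); auto. Qed.

Lemma rpd_tri u v w : adm u -> adm v -> adm w -> rpd u w <= rpd u v + rpd v w.
Proof.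
  intros Hu Hv Hw.
  apply (is_ulim_le U HU (fun n => d (u n) (w n) / a n) (fun n => d (u n) (v n) / a n + d (v n) (w n) / a n)).
  - eapply (U_mono U HU); [|exact Ua1]. intros n Hn. unfold Rdiv. rewrite <- Rmult_plus_distr_r.
    apply Rmult_le_compat_r. left; apply Rinv_0_lt_compat; lra. apply dtri; auto.
  - apply rpd_lim; auto.
  - apply (is_ulim_plus U HU); apply rpd_lim; auto.
Qed.

Lemma rpd_congr u u' v v' : adm u -> adm u' -> adm v -> adm v' ->
  rpd u u' = 0 -> rpd v v' = 0 -> rpd u v = rpd u' v'.
Proof.
  intros Hu Hu' Hv Hv' E1 E2.
  pose proof (rpd_tri u v' v Hu Hv' Hv). pose proof (rpd_tri u u' v' Hu Hu' Hv').
  pose proof (rpd_tri u' v v' Hu' Hv Hv'). pose proof (rpd_tri u' u v Hu' Hu Hv).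
  rewrite (rpd_sym u' u) in *. rewrite (rpd_sym v' v) in *.
  lra.
Qed.

Definition e0 : CS := exist _ e adm_e.
Definition mkpt (x : CS) : CP :=
  exist _ (fun y => cone_pdist x y = 0) (ex_intro _ x (fun y => iff_refl _)).
Definition mkr (u : nat -> X) : CP :=
  match excluded_middle_informative (adm u) with
  | left H => mkpt (exist _ u H) | right _ => mkpt e0 end.
Definition rep (P : CP) : nat -> X := proj1_sig (cone_rep P).

Lemma rep_adm (P : CP) : adm (rep P).
Proof. unfold rep. apply (proj2_sig (cone_rep P)). Qed.

Lemma rep_spec (P : CP) : forall y, proj1_sig P y <-> cone_pdist (cone_rep P) y = 0.
Proof.
  unfold cone_rep. destruct (IndefiniteDescription.constructive_indefinite_description _ (proj2_sig P)) as [x Hx]. simpl. auto.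
Qed.

Lemma cone_dist_rep (P Q : CP) : cone_dist P Q = rpd (rep P) (rep Q).
Proof. reflexivity. Qed.

Lemma rep_mkr u : adm u -> rpd (rep (mkr u)) u = 0.
Proof.
  intros Hu. pose proof (rep_spec (mkr u) (exist _ u Hu)) as H.
  unfold mkr in *. destruct (excluded_middle_informative (adm u)) as [H'|H']; [|tauto].
  unfold rep. apply H. simpl. unfold cone_pdist. simpl. apply rpd_self.
Qed.

Lemma cone_dist_mkr u v : adm u -> adm v -> cone_dist (mkr u) (mkr v) = rpd u v.
Proof.
  intros Hu Hv. rewrite cone_dist_rep. apply rpd_congr; auto using rep_adm; apply rep_mkr; auto.
Qed.

Lemma CP_ext (P Q : CP) : (forall y, proj1_sig P y <-> proj1_sig Q y) -> P = Q.
Proof.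
  intros H. destruct P as [P HP], Q as [Q HQ]. simpl in H.
  assert (P = Q). { apply functional_extensionality. intros y. apply propositional_extensionality. auto. }
  subst. f_equal. apply proof_irrelevance.
Qed.

Lemma mkr_rep (P : CP) : mkr (rep P) = P.
Proof.
  apply CP_ext. intros y. rewrite (rep_spec P y). unfold mkr.
  destruct (excluded_middle_informative (adm (rep P))) as [H|H].
  - simpl. reflexivity.
  - exfalso. apply H. apply rep_adm.
Qed.

Lemma cone_metric : is_metric (@cone_dist X d U a e).
Proof.
  split; [|split; [|split]].
  - intros P Q. rewrite cone_dist_rep. apply rpd_nonneg; apply rep_adm.
  - intros P Q. split.
    + intros H. rewrite cone_dist_rep in H. apply CP_ext. intros y.
      rewrite !rep_spec. unfold cone_pdist. fold (rep P). fold (rep Q).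
      pose proof (proj2_sig y) as Hy. simpl in Hy.
      pose proof (rep_adm P). pose proof (rep_adm Q).
      pose proof (rpd_tri (rep P) (rep Q) (proj1_sig y) H0 H1 Hy).
      pose proof (rpd_tri (rep Q) (rep P) (proj1_sig y) H1 H0 Hy).
      pose proof (rpd_nonneg (rep P) (proj1_sig y) H0 Hy).
      pose proof (rpd_nonneg (rep Q) (proj1_sig y) H1 Hy).
      rewrite (rpd_sym (rep Q) (rep P)) in *. unfold rpd in *.
      split; intros; lra.
    + intros ->. rewrite cone_dist_rep. apply rpd_self.
  - intros P Q. rewrite !cone_dist_rep. apply rpd_sym.
  - intros P Q R0. rewrite !cone_dist_rep. apply rpd_tri; apply rep_adm.
Qed.

Lemma mkr_eq u v : adm u -> adm v -> rpd u v = 0 -> mkr u = mkr v.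
Proof. intros. apply cone_metric. rewrite cone_dist_mkr; auto. Qed.

Definition clampn (u v : nat -> X) (t : R) (n : nat) : R := Rmin (Rmax 0 (t * a n)) (d (u n) (v n)).
Definition LGs (u v : nat -> X) (g : nat -> R -> X) (t : R) : nat -> X :=
  fun n => g n (clampn u v t n).
Definition LG (u v : nat -> X) (g : nat -> R -> X) (t : R) : CP := mkr (LGs u v g t).

Lemma clampn_range u v t n : 0 <= clampn u v t n <= d (u n) (v n).
Proof.
  unfold clampn. split.
  - apply Rmin_glb. apply Rmax_l. apply dpos; auto.
  - apply Rmin_r.
Qed.

Section LGsec.
Variables (u v : nat -> X) (g : nat -> R -> X).
Hypotheses (Hu : adm u) (Hv : adm v) (Hg : forall n, geodesic_seg d (u n) (v n) (g n)).

Lemma LGs_adm t : adm (LGs u v g t).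
Proof.
  apply (adm_near u); auto. destruct (adm_dd u v Hu Hv) as [M [HM H]]. exists M.
  eapply (U_mono U HU); [|exact H]. intros n [H1 H2]. unfold LGs.
  rewrite (geo_param X d Hm (u n) (v n)); auto. pose proof (clampn_range u v t n). lra.
  apply clampn_range.
Qed.

Lemma clampn_lim t : is_ulim U (fun n => clampn u v t n / a n) (Rmin (Rmax 0 t) (rpd u v)).
Proof.
  apply (is_ulim_ext U HU (fun n => Rmin (Rmax 0 t) (d (u n) (v n) / a n))).
  - eapply (U_mono U HU); [|exact Ua1]. intros n Hn. unfold clampn. rewrite clamp_scale; auto. lra.
  - apply (is_ulim_min U HU). apply (is_ulim_const U HU). apply rpd_lim; auto.
Qed.

Lemma LG_dist s t : cone_dist (LG u v g s) (LG u v g t) =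
  Rabs (Rmin (Rmax 0 s) (rpd u v) - Rmin (Rmax 0 t) (rpd u v)).
Proof.
  unfold LG. rewrite cone_dist_mkr by apply LGs_adm. apply (ulim_eq U HU).
  apply (is_ulim_ext U HU (fun n => Rabs (clampn u v s n / a n - clampn u v t n / a n))).
  - eapply (U_mono U HU); [|exact Ua1]. intros n Hn. unfold LGs.
    rewrite (geo_dist X d (u n) (v n)); auto using clampn_range.
    replace (clampn u v s n / a n - clampn u v t n / a n) with ((clampn u v s n - clampn u v t n) * / a n)
      by (unfold Rdiv; ring).
    rewrite Rabs_mult, (Rabs_right (/ a n)). reflexivity. left; apply Rinv_0_lt_compat; lra.
  - apply (is_ulim_abs U HU). apply (is_ulim_minus U HU); apply clampn_lim.
Qed.

Lemma LG_0 : LG u v g 0 = mkr u.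
Proof.
  unfold LG. apply mkr_eq; auto. apply LGs_adm. apply rpd_zero_lim.
  apply (is_ulim_ext U HU (fun _ => 0)); [|apply (is_ulim_const U HU)].
  apply U_true; auto. intros n. unfold LGs, clampn. rewrite Rmult_0_l, Rmax_left by lra.
  rewrite Rmin_left by (apply dpos; auto). destruct (Hg n) as [H0 _]. rewrite H0, dself; auto.
  unfold Rdiv; ring.
Qed.

Lemma LG_D : LG u v g (rpd u v) = mkr v.
Proof.
  unfold LG. apply mkr_eq; auto. apply LGs_adm. apply rpd_zero_lim.
  apply (is_ulim_ext U HU (fun n => d (u n) (v n) / a n - clampn u v (rpd u v) n / a n)).
  - apply U_true; auto. intros n. unfold LGs. rewrite (geo_param2 X d Hm (u n) (v n)); auto.
    unfold Rdiv; ring. apply clampn_range.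
  - replace 0 with (rpd u v - Rmin (Rmax 0 (rpd u v)) (rpd u v)).
    apply (is_ulim_minus U HU). apply rpd_lim; auto. apply clampn_lim.
    pose proof (rpd_nonneg u v Hu Hv). rewrite Rmax_right, Rmin_left; lra.
Qed.

Lemma LG_geo : geodesic_seg (@cone_dist X d U a e) (mkr u) (mkr v) (LG u v g).
Proof.
  unfold geodesic_seg. rewrite cone_dist_mkr; auto. split; [|split].
  - apply LG_0.
  - apply LG_D.
  - intros s t Hs Ht. rewrite LG_dist. rewrite (Rmax_right 0 s), (Rmax_right 0 t) by lra.
    rewrite Rmin_left, Rmin_left by lra. reflexivity.
Qed.

Lemma LGs_near (sn : nat -> R) s : U (fun n => 0 <= sn n <= d (u n) (v n)) ->
  is_ulim U (fun n => sn n / a n) s -> 0 <= s <= rpd u v /\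
  rpd (LGs u v g s) (fun n => g n (sn n)) = 0.
Proof.
  intros Hs Hl.
  assert (Hr : 0 <= s <= rpd u v).
  { split.
    - apply (is_ulim_le U HU (fun _ => 0) (fun n => sn n / a n)); auto using (is_ulim_const U HU).
      eapply (U_mono U HU); [|exact (U_inter U HU _ _ Hs Ua1)]. intros n [H1 H2].
      unfold Rdiv. apply Rmult_le_pos. lra. left; apply Rinv_0_lt_compat; lra.
    - apply (is_ulim_le U HU (fun n => sn n / a n) (fun n => d (u n) (v n) / a n)); auto using rpd_lim.
      eapply (U_mono U HU); [|exact (U_inter U HU _ _ Hs Ua1)]. intros n [H1 H2].
      unfold Rdiv. apply Rmult_le_compat_r. left; apply Rinv_0_lt_compat; lra. lra. }
  split; auto. apply rpd_zero_lim.
  apply (is_ulim_ext U HU (fun n => Rabs (clampn u v s n / a n - sn n / a n))).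
  - eapply (U_mono U HU); [|exact (U_inter U HU _ _ Hs Ua1)]. intros n [H1 H2]. unfold LGs.
    rewrite (geo_dist X d (u n) (v n)); auto using clampn_range.
    replace (clampn u v s n / a n - sn n / a n) with ((clampn u v s n - sn n) * / a n)
      by (unfold Rdiv; ring).
    rewrite Rabs_mult, (Rabs_right (/ a n)). reflexivity. left; apply Rinv_0_lt_compat; lra.
  - replace 0 with (Rabs (Rmin (Rmax 0 s) (rpd u v) - s)).
    apply (is_ulim_abs U HU), (is_ulim_minus U HU); auto. apply clampn_lim.
    rewrite Rmax_right, Rmin_left by lra. rewrite Rminus_diag. apply Rabs_R0.
Qed.

End LGsec.
End Cone2.

Lemma sel_map {A B : Type} (f : A -> B) k x y z : sel k (f x) (f y) (f z) = f (sel k x y z).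
Proof. destruct k as [|[|k]]; reflexivity. Qed.

Lemma on_tri_side {X : Type} (d : X -> X -> R) x y z g1 g2 g3 A B C p pb k :
  on_side d (sel k x y z) (sel (nxt k) x y z) (sel k g1 g2 g3) (sel k A B C) (sel (nxt k) A B C) p pb ->
  on_triangle d x y z g1 g2 g3 A B C p pb.
Proof. destruct k as [|[|k]]; unfold on_triangle; simpl; auto. Qed.

Lemma side_of_on_tri {X : Type} (d : X -> X -> R) x y z g1 g2 g3 A B C p pb :
  on_triangle d x y z g1 g2 g3 A B C p pb -> exists k, (k < 3)%nat /\
  on_side d (sel k x y z) (sel (nxt k) x y z) (sel k g1 g2 g3) (sel k A B C) (sel (nxt k) A B C) p pb.
Proof. intros [H|[H|H]]; [exists 0%nat|exists 1%nat|exists 2%nat]; split; auto. Qed.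

Lemma Ef_scale k l j m c a b al : 0 < al ->
  Ef k l j m (c / al) (a / al) (b / al) = Ef k l j m c a b / al ^ 2.
Proof. intros H. destruct k as [|[|k]]; destruct j as [|[|j]]; cbv beta iota zeta delta [Ef Eform wt]; field; lra. Qed.

Lemma sqrt_scale x al : 0 < al -> sqrt (x / al ^ 2) = sqrt x / al.
Proof.
  intros H. destruct (Rle_lt_dec 0 x).
  - rewrite sqrt_div_alt by (apply pow_lt; auto). rewrite sqrt_pow2; lra.
  - rewrite !sqrt_neg_0. unfold Rdiv; ring. lra.
    unfold Rdiv. assert (0 < / al ^ 2) by (apply Rinv_0_lt_compat, pow_lt; auto). nra.
Qed.

Lemma Ef_degen t D : 0 <= t <= D -> Ef 0 (t / D) 1 ((D - t) / (D - t)) D (D - t) t = 0.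
Proof.
  intros Ht. cbv beta iota zeta delta [Ef Eform wt].
  destruct (Req_dec D 0) as [E|E].
  - assert (t = 0) by lra. subst. rewrite Rminus_0_r. unfold Rdiv. rewrite Rinv_0. ring.
  - destruct (Req_dec t D) as [E2|E2].
    + subst. rewrite Rminus_diag. unfold Rdiv. rewrite Rinv_0, Rinv_r by auto. ring.
    + unfold Rdiv. rewrite Rinv_r by lra. field. auto.
Qed.

Section UlimEf.
Variable U : (nat -> Prop) -> Prop.
Hypothesis HU : ultrafilter U.
Lemma is_ulim_pow2 u l : is_ulim U u l -> is_ulim U (fun n => u n ^ 2) (l ^ 2).
Proof.
  intros H. apply (is_ulim_ext U HU (fun n => u n * u n)). apply U_true; auto. intros; ring.
  replace (l ^ 2) with (l * l) by ring. apply is_ulim_mult; auto.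
Qed.

Lemma is_ulim_Ef k ls l j ms m cs c as_ a0 bs b :
  is_ulim U ls l -> is_ulim U ms m -> is_ulim U cs c -> is_ulim U as_ a0 -> is_ulim U bs b ->
  is_ulim U (fun n => Ef k (ls n) j (ms n) (cs n) (as_ n) (bs n)) (Ef k l j m c a0 b).
Proof.
  intros H1 H2 H3 H4 H5.
  destruct k as [|[|k]]; destruct j as [|[|j]]; cbv beta iota zeta delta [Ef Eform wt];
  repeat first [ apply (is_ulim_plus U HU) | apply (is_ulim_minus U HU) | apply (is_ulim_opp U HU)
    | apply (is_ulim_mult U HU) | apply is_ulim_pow2 | apply (is_ulim_const U HU) | assumption ].
Qed.
End UlimEf.

Lemma Ef_swap k l j m c a b : Ef k l j m c a b = Ef j m k l c a b.
Proof. destruct k as [|[|k]]; destruct j as [|[|j]]; cbv beta iota zeta delta [Ef Eform wt]; ring. Qed.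

Lemma Ef_indep_l k l l' j m c a b : sel k c a b = 0 ->
  c <= a + b -> a <= b + c -> b <= c + a -> Ef k l j m c a b = Ef k l' j m c a b.
Proof.
  intros H0 T1 T2 T3. destruct k as [|[|k]]; simpl in H0.
  - assert (a = b) by lra. subst c b.
    destruct j as [|[|j]]; cbv beta iota zeta delta [Ef Eform wt]; ring.
  - assert (b = c) by lra. subst a b.
    destruct j as [|[|j]]; cbv beta iota zeta delta [Ef Eform wt]; ring.
  - assert (c = a) by lra. subst b c.
    destruct j as [|[|j]]; cbv beta iota zeta delta [Ef Eform wt]; ring.
Qed.

Lemma Ef_indep_m k l j m m' c a b : sel j c a b = 0 ->
  c <= a + b -> a <= b + c -> b <= c + a -> Ef k l j m c a b = Ef k l j m' c a b.
Proof. intros. rewrite !(Ef_swap k l). apply Ef_indep_l; auto. Qed.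

Lemma sel_app {A B : Type} k (x y z : A -> B) n : sel k x y z n = sel k (x n) (y n) (z n).
Proof. destruct k as [|[|k]]; reflexivity. Qed.

Lemma sel_geo {X : Type} (d : X -> X -> R) k x y z g1 g2 g3 :
  geodesic_seg d x y g1 -> geodesic_seg d y z g2 -> geodesic_seg d z x g3 ->
  geodesic_seg d (sel k x y z) (sel (nxt k) x y z) (sel k g1 g2 g3).
Proof. destruct k as [|[|k]]; simpl; auto. Qed.

Lemma sel_edist k A B C (x y z : R) :
  edist A B = x -> edist B C = y -> edist C A = z ->
  edist (sel k A B C) (sel (nxt k) A B C) = sel k x y z.
Proof. destruct k as [|[|k]]; simpl; auto. Qed.

Section Xcat.
Variables (X : Type) (d : X -> X -> R) (Hm : is_metric d).

Lemma Xcat c r delta x y z g1 g2 g3 k j s t :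
  ball_dCAT0 d c r delta -> d c x <= r -> d c y <= r -> d c z <= r ->
  geodesic_seg d x y g1 -> geodesic_seg d y z g2 -> geodesic_seg d z x g3 ->
  0 <= s <= d (sel k x y z) (sel (nxt k) x y z) ->
  0 <= t <= d (sel j x y z) (sel (nxt j) x y z) ->
  d (sel k g1 g2 g3 s) (sel j g1 g2 g3 t) <=
  sqrt (Ef k (s / d (sel k x y z) (sel (nxt k) x y z)) j (t / d (sel j x y z) (sel (nxt j) x y z))
     (d x y) (d y z) (d z x)) + delta.
Proof.
  intros Hb Hx Hy Hz H1 H2 H3 Hs Ht.
  destruct (tri_exists (d y z) (d z x) (d x y)) as [A [B [C [EA [EB EC]]]]];
    try apply (dpos X d Hm).
  - pose proof (dtri X d Hm x z y). rewrite (dsym X d Hm x z), (dsym X d Hm z y) in H. lra.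
  - pose proof (dtri X d Hm y x z). rewrite (dsym X d Hm y x), (dsym X d Hm x z) in H. lra.
  - pose proof (dtri X d Hm z y x). rewrite (dsym X d Hm z y), (dsym X d Hm y x) in H. lra.
  - specialize (Hb x y z g1 g2 g3 Hx Hy Hz H1 H2 H3 A B C EA EB EC).
    rewrite <- EA, <- EB, <- EC. rewrite <- euclid_dist.
    apply Hb; eapply on_tri_side; unfold on_side; eauto.
Qed.
End Xcat.

Lemma is_ulim_inv U (HU : ultrafilter U) u l : l <> 0 -> is_ulim U u l -> is_ulim U (fun n => / u n) (/ l).
Proof.
  intros Hl H. apply (is_ulim_cont U HU (/ id)%F u l); auto.
  apply continuity_pt_inv; auto. apply derivable_continuous_pt, derivable_pt_id.
Qed.

Section DirB.
Variables (X : Type) (d : X -> X -> R) (Hgeo : geodesic_space d) (f : R -> R)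
  (Hf0 : forall r, 0 <= r -> 0 <= f r)
  (Hf1 : forall eps, 0 < eps -> exists R0, forall r, R0 < r -> Rabs (f r / r) < eps)
  (Hf2 : forall r, 0 < r -> forall c : X, ball_dCAT0 d c r (f r)).
Variables (U : (nat -> Prop) -> Prop) (a : nat -> R) (e : nat -> X).
Hypotheses (HU : ultrafilter U) (HNP : nonprincipal U) (Ha : tends_to_infinity a).

Let Hm : is_metric d := proj1 Hgeo.
Notation adm := (cone_admissible d U a e).
Notation rpd := (rpd X d U a).
Notation LG := (LG X d U a e Hm HU).
Notation LGs := (LGs X d a).
Notation mkr := (mkr X d U a e Hm HU).
Let Ladm := LGs_adm X d U a e Hm HU HNP Ha.
Let Lrpd := rpd_lim X d U a e Hm HU HNP Ha.
Let Lcdm := cone_dist_mkr X d U a e Hm HU HNP Ha.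
Let LUa1 := Ua1 U a HU HNP Ha.

Lemma ratio_lim v w s : adm v -> adm w -> 0 <= s <= rpd v w ->
  is_ulim U (fun n => (clampn X d a v w s n / a n) / (d (v n) (w n) / a n)) (s / rpd v w).
Proof.
  intros Hv Hw Hs. destruct (Req_dec (rpd v w) 0) as [E|E].
  - assert (s = 0) by lra. subst s. rewrite E. replace (0 / 0) with 0 by (unfold Rdiv; ring).
    apply (is_ulim_ext U HU (fun _ => 0)); [|apply (is_ulim_const U HU)].
    apply U_true; auto. intros n. unfold clampn. rewrite Rmult_0_l, Rmax_left by lra.
    rewrite Rmin_left by (apply (dpos X d Hm)). unfold Rdiv; ring.
  - replace (s / rpd v w) with (Rmin (Rmax 0 s) (rpd v w) * / rpd v w).
    + apply (is_ulim_mult U HU). apply (clampn_lim X d U a e Hm HU HNP Ha); auto.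
      apply is_ulim_inv; auto.
    + rewrite Rmax_right, Rmin_left by lra. reflexivity.
Qed.

Lemma fr_lim (r : nat -> R) : U (fun n => a n <= r n) -> is_ulim U (fun n => f (r n) / r n) 0.
Proof.
  intros Hr eps He. destruct (Hf1 eps He) as [R0 HR0].
  eapply (U_mono U HU); [|exact (U_inter U HU _ _ Hr (U_tends U HU HNP a Ha (R0 + 1)))].
  intros n [H1 H2]. rewrite Rminus_0_r. apply HR0. lra.
Qed.

Lemma Bcore u0 u1 u2 G0 G1 G2 k j s t :
  adm u0 -> adm u1 -> adm u2 ->
  (forall n, geodesic_seg d (u0 n) (u1 n) (G0 n)) ->
  (forall n, geodesic_seg d (u1 n) (u2 n) (G1 n)) ->
  (forall n, geodesic_seg d (u2 n) (u0 n) (G2 n)) ->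
  0 <= s <= rpd (sel k u0 u1 u2) (sel (nxt k) u0 u1 u2) ->
  0 <= t <= rpd (sel j u0 u1 u2) (sel (nxt j) u0 u1 u2) ->
  cone_dist (LG (sel k u0 u1 u2) (sel (nxt k) u0 u1 u2) (sel k G0 G1 G2) s)
            (LG (sel j u0 u1 u2) (sel (nxt j) u0 u1 u2) (sel j G0 G1 G2) t)
  <= sqrt (Ef k (s / rpd (sel k u0 u1 u2) (sel (nxt k) u0 u1 u2))
              j (t / rpd (sel j u0 u1 u2) (sel (nxt j) u0 u1 u2))
              (rpd u0 u1) (rpd u1 u2) (rpd u2 u0)).
Proof.
  intros A0 A1 A2 HG0 HG1 HG2 Hs Ht.
  set (vk := sel k u0 u1 u2). set (wk := sel (nxt k) u0 u1 u2). set (gk := sel k G0 G1 G2).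
  set (vj := sel j u0 u1 u2). set (wj := sel (nxt j) u0 u1 u2). set (gj := sel j G0 G1 G2).
  assert (Avk : adm vk) by (unfold vk; destruct k as [|[|k]]; auto).
  assert (Awk : adm wk) by (unfold wk; destruct k as [|[|k]]; auto).
  assert (Avj : adm vj) by (unfold vj; destruct j as [|[|j]]; auto).
  assert (Awj : adm wj) by (unfold wj; destruct j as [|[|j]]; auto).
  assert (Hgk : forall n, geodesic_seg d (vk n) (wk n) (gk n)).
  { intros n. unfold vk, wk, gk. rewrite !sel_app. apply sel_geo; auto. }
  assert (Hgj : forall n, geodesic_seg d (vj n) (wj n) (gj n)).
  { intros n. unfold vj, wj, gj. rewrite !sel_app. apply sel_geo; auto. }
  fold vk wk gk vj wj gj in Hs, Ht |- *.
  unfold Submission.LG. rewrite Lcdm by (apply Ladm; auto).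
  set (sig := fun n => clampn X d a vk wk s n).
  set (tau := fun n => clampn X d a vj wj t n).
  set (r := fun n => d (u0 n) (u1 n) + d (u0 n) (u2 n) + a n).
  set (rhs := fun n => sqrt (Ef k ((sig n / a n) / (d (vk n) (wk n) / a n)) j
          ((tau n / a n) / (d (vj n) (wj n) / a n))
          (d (u0 n) (u1 n) / a n) (d (u1 n) (u2 n) / a n) (d (u2 n) (u0 n) / a n))
          + f (r n) / r n * (r n / a n)).
  eapply (is_ulim_le U HU _ rhs); [ | exact (Lrpd _ _ (Ladm _ _ _ Avk Awk Hgk s) (Ladm _ _ _ Avj Awj Hgj t)) | ].
  - eapply (U_mono U HU); [|exact LUa1]. intros n Hn.
    assert (Hr : 0 < r n) by (unfold r; pose proof (dpos X d Hm (u0 n) (u1 n)); pose proof (dpos X d Hm (u0 n) (u2 n)); lra).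
    assert (E1 : f (r n) / r n * (r n / a n) = f (r n) / a n) by (field; lra).
    unfold rhs. rewrite E1.
    assert (E2 : forall p q, (p / a n) / (q / a n) = p / q).
    { intros p q. destruct (Req_dec q 0) as [->|Hq]. unfold Rdiv. rewrite Rmult_0_l, !Rinv_0. ring.
      field. split; lra. }
    rewrite !E2. rewrite Ef_scale by lra. rewrite sqrt_scale by lra.
    assert (Hx := Xcat X d Hm (u0 n) (r n) (f (r n)) (u0 n) (u1 n) (u2 n) (G0 n) (G1 n) (G2 n) k j (sig n) (tau n)
      (Hf2 (r n) Hr (u0 n))).
    rewrite <- !sel_app in Hx. fold vk wk gk vj wj gj in Hx.
    unfold Submission.LGs. fold (sig n) (tau n).
    replace (d (gk n (sig n)) (gj n (tau n)) / a n) with (d (gk n (sig n)) (gj n (tau n)) * / a n) by reflexivity.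
    replace (sqrt (Ef k (sig n / d (vk n) (wk n)) j (tau n / d (vj n) (wj n)) (d (u0 n) (u1 n))
      (d (u1 n) (u2 n)) (d (u2 n) (u0 n))) / a n + f (r n) / a n) with
      ((sqrt (Ef k (sig n / d (vk n) (wk n)) j (tau n / d (vj n) (wj n)) (d (u0 n) (u1 n))
      (d (u1 n) (u2 n)) (d (u2 n) (u0 n))) + f (r n)) * / a n) by (unfold Rdiv; ring).
    apply Rmult_le_compat_r. left; apply Rinv_0_lt_compat; lra.
    apply Hx; auto.
    + rewrite (dself X d Hm). unfold r. pose proof (dpos X d Hm (u0 n) (u1 n)); pose proof (dpos X d Hm (u0 n) (u2 n)); lra.
    + unfold r. pose proof (dpos X d Hm (u0 n) (u2 n)); lra.
    + unfold r. pose proof (dpos X d Hm (u0 n) (u1 n)); lra.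
    + apply clampn_range; auto.
    + apply clampn_range; auto.
  -
    replace (sqrt (Ef k (s / rpd vk wk) j (t / rpd vj wj) (rpd u0 u1) (rpd u1 u2) (rpd u2 u0)))
      with (sqrt (Ef k (s / rpd vk wk) j (t / rpd vj wj) (rpd u0 u1) (rpd u1 u2) (rpd u2 u0))
        + 0 * (rpd u0 u1 + rpd u0 u2 + 1)) by ring.
    apply (is_ulim_plus U HU).
    + apply (is_ulim_sqrt U HU). apply is_ulim_Ef; auto.
      * apply ratio_lim; auto.
      * apply ratio_lim; auto.
    + apply (is_ulim_mult U HU).
      * apply fr_lim. eapply (U_mono U HU); [|exact LUa1]. intros n Hn. unfold r.
        pose proof (dpos X d Hm (u0 n) (u1 n)); pose proof (dpos X d Hm (u0 n) (u2 n)); lra.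
      * apply (is_ulim_ext U HU (fun n => d (u0 n) (u1 n) / a n + d (u0 n) (u2 n) / a n + 1)).
        -- eapply (U_mono U HU); [|exact LUa1]. intros n Hn. unfold r. field. lra.
        -- apply (is_ulim_plus U HU). apply (is_ulim_plus U HU); auto. apply (is_ulim_const U HU).
Qed.

Definition gsel (x y : X) : R -> X :=
  proj1_sig (constructive_indefinite_description _ (proj2 Hgeo x y)).
Lemma gsel_geo x y : geodesic_seg d x y (gsel x y).
Proof. unfold gsel. destruct (constructive_indefinite_description _ _) as [g Hg]. auto. Qed.

Notation CD := (@cone_dist X d U a e).
Let Lmet := cone_metric X d U a e Hm HU HNP Ha.
Let LLG_D := LG_D X d U a e Hm HU HNP Ha.
Let LLG_geo := LG_geo X d U a e Hm HU HNP Ha.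
Let Lrep_adm := rep_adm X d U a e.
Let Lmkr_rep := mkr_rep X d U a e Hm HU.

Lemma Buniq u v G h t : adm u -> adm v -> (forall n, geodesic_seg d (u n) (v n) (G n)) ->
  geodesic_seg CD (mkr u) (mkr v) h -> 0 <= t <= rpd u v -> h t = LG u v G t.
Proof.
  intros Hu Hv HG [H0 [H1 H2]] Ht.
  rewrite Lcdm in H1, H2 by auto.
  set (w := rep X d U a e (h t)).
  assert (Aw : adm w) by apply Lrep_adm.
  assert (Hw : mkr w = h t) by apply Lmkr_rep.
  assert (Evw : rpd v w = rpd u v - t).
  { rewrite <- Lcdm by auto. rewrite Hw, <- H1. rewrite H2 by lra. rewrite Rabs_right; lra. }
  assert (Ewu : rpd w u = t).
  { rewrite <- Lcdm by auto. rewrite Hw, <- H0. rewrite H2 by lra. rewrite Rminus_0_r, Rabs_right; lra. }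
  pose proof (Bcore u v w G (fun n => gsel (v n) (w n)) (fun n => gsel (w n) (u n)) 0%nat 1%nat t (rpd v w)
    Hu Hv Aw HG (fun n => gsel_geo _ _) (fun n => gsel_geo _ _)) as B.
  cbn [sel nxt] in B. rewrite LLG_D in B by (auto; intros; apply gsel_geo).
  rewrite Evw, Ewu in B. rewrite Ef_degen in B by lra. rewrite sqrt_0 in B.
  apply Lmet. rewrite (proj1 (proj2 (proj2 Lmet))). apply Rle_antisym. rewrite <- Hw. apply B; lra.
  apply Lmet.
Qed.

Lemma adm_sel k u0 u1 u2 : adm u0 -> adm u1 -> adm u2 -> adm (sel k u0 u1 u2).
Proof. destruct k as [|[|k]]; auto. Qed.

Lemma cone_tri u0 u1 u2 h1 h2 h3 : adm u0 -> adm u1 -> adm u2 ->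
  geodesic_seg CD (mkr u0) (mkr u1) h1 -> geodesic_seg CD (mkr u1) (mkr u2) h2 ->
  geodesic_seg CD (mkr u2) (mkr u0) h3 ->
  triangle_dCAT0 CD (mkr u0) (mkr u1) (mkr u2) h1 h2 h3 0.
Proof.
  intros A0 A1 A2 H1 H2 H3.
  set (G0 := fun n => gsel (u0 n) (u1 n)). set (G1 := fun n => gsel (u1 n) (u2 n)).
  set (G2 := fun n => gsel (u2 n) (u0 n)).
  assert (Hu : forall k s, 0 <= s <= rpd (sel k u0 u1 u2) (sel (nxt k) u0 u1 u2) ->
    sel k h1 h2 h3 s = LG (sel k u0 u1 u2) (sel (nxt k) u0 u1 u2) (sel k G0 G1 G2) s).
  { intros k s Hs. destruct k as [|[|k]]; cbn [sel nxt] in *; apply Buniq; auto;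
      intros; apply gsel_geo. }
  intros A B C EA EB EC p pb q qb Hp Hq.
  destruct (side_of_on_tri _ _ _ _ _ _ _ _ _ _ _ _ Hp) as [k [_ [s [Hs [-> ->]]]]].
  destruct (side_of_on_tri _ _ _ _ _ _ _ _ _ _ _ _ Hq) as [j [_ [t [Ht [-> ->]]]]].
  rewrite !sel_map in Hs, Ht |- *. rewrite Lcdm in Hs, Ht by (apply adm_sel; auto).
  repeat rewrite (sel_map mkr). repeat rewrite Lcdm by (apply adm_sel; auto).
  rewrite Lcdm in EA, EB, EC by auto.
  rewrite Hu, Hu by auto. rewrite euclid_dist. rewrite EA, EB, EC, Rplus_0_r.
  apply Bcore; auto; intros; apply gsel_geo.
Qed.

Lemma cone_CAT0 : CAT0 CD.
Proof.
  split.
  - split. apply Lmet. intros P Q. rewrite <- (Lmkr_rep P), <- (Lmkr_rep Q).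
    exists (LG (rep X d U a e P) (rep X d U a e Q) (fun n => gsel (rep X d U a e P n) (rep X d U a e Q n))).
    apply LLG_geo; auto. intros; apply gsel_geo.
  - intros x y z h1 h2 h3 H1 H2 H3.
    pose proof (cone_tri (rep X d U a e x) (rep X d U a e y) (rep X d U a e z) h1 h2 h3) as T.
    rewrite !Lmkr_rep in T. apply T; auto.
Qed.

End DirB.

Lemma sel_prop {T : Type} (P : T -> Prop) k x y z : P x -> P y -> P z -> P (sel k x y z).
Proof. destruct k as [|[|k]]; auto. Qed.

Section Step2.
Variables (X : Type) (d : X -> X -> R) (Hm : is_metric d).

Definition Sset (r : R) (del : R) : Prop := del = 0 \/
  exists c x y z g1 g2 g3 k s j t, d c x <= r /\ d c y <= r /\ d c z <= r /\
    geodesic_seg d x y g1 /\ geodesic_seg d y z g2 /\ geodesic_seg d z x g3 /\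
    0 <= s <= d (sel k x y z) (sel (nxt k) x y z) /\
    0 <= t <= d (sel j x y z) (sel (nxt j) x y z) /\
    del = d (sel k g1 g2 g3 s) (sel j g1 g2 g3 t) -
      sqrt (Ef k (s / d (sel k x y z) (sel (nxt k) x y z)) j (t / d (sel j x y z) (sel (nxt j) x y z))
        (d x y) (d y z) (d z x)).

Lemma side_pt_bound c x y z g1 g2 g3 k s r :
  d c x <= r -> d c y <= r -> d c z <= r ->
  geodesic_seg d x y g1 -> geodesic_seg d y z g2 -> geodesic_seg d z x g3 ->
  0 <= s <= d (sel k x y z) (sel (nxt k) x y z) -> d (sel k g1 g2 g3 s) c <= 3 * r.
Proof.
  intros Hx Hy Hz H1 H2 H3 Hs.
  assert (Hv : d c (sel k x y z) <= r) by (apply sel_prop; auto).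
  assert (Hw : d c (sel (nxt k) x y z) <= r) by (apply sel_prop; auto).
  pose proof (sel_geo d k x y z g1 g2 g3 H1 H2 H3) as G.
  pose proof (geo_param X d Hm _ _ _ s G Hs) as E.
  pose proof (dtri X d Hm (sel k g1 g2 g3 s) (sel k x y z) c).
  pose proof (dtri X d Hm (sel k x y z) c (sel (nxt k) x y z)).
  rewrite (dsym X d Hm (sel k x y z) c) in *. lra.
Qed.

Lemma Sbound r : bound (Sset r).
Proof.
  exists (6 * Rabs r). intros del [->|H].
  - pose proof (Rabs_pos r). lra.
  - destruct H as [c [x [y [z [g1 [g2 [g3 [k [s [j [t [Hx [Hy [Hz [H1 [H2 [H3 [Hs [Ht ->]]]]]]]]]]]]]]]]]]].
    pose proof (side_pt_bound c x y z g1 g2 g3 k s r Hx Hy Hz H1 H2 H3 Hs).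
    pose proof (side_pt_bound c x y z g1 g2 g3 j t r Hx Hy Hz H1 H2 H3 Ht).
    pose proof (dtri X d Hm (sel k g1 g2 g3 s) c (sel j g1 g2 g3 t)).
    rewrite (dsym X d Hm c (sel j g1 g2 g3 t)) in *.
    pose proof (sqrt_pos (Ef k (s / d (sel k x y z) (sel (nxt k) x y z)) j (t / d (sel j x y z) (sel (nxt j) x y z))
        (d x y) (d y z) (d z x))).
    pose proof (dpos X d Hm c x). pose proof (Rle_abs r). lra.
Qed.

Definition fS (r : R) : R :=
  proj1_sig (completeness (Sset r) (Sbound r) (ex_intro _ 0 (or_introl eq_refl))).

Lemma fS_lub r : is_lub (Sset r) (fS r).
Proof. unfold fS. destruct completeness as [m Hm']. auto. Qed.

Lemma fS_nonneg r : 0 <= fS r.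
Proof. apply (proj1 (fS_lub r)). left; auto. Qed.

Lemma fS_ball r c : ball_dCAT0 d c r (fS r).
Proof.
  intros x y z g1 g2 g3 Hx Hy Hz H1 H2 H3 A B C EA EB EC p pb q qb Hp Hq.
  destruct (side_of_on_tri _ _ _ _ _ _ _ _ _ _ _ _ Hp) as [k [_ [s [Hs [-> ->]]]]].
  destruct (side_of_on_tri _ _ _ _ _ _ _ _ _ _ _ _ Hq) as [j [_ [t [Ht [-> ->]]]]].
  rewrite euclid_dist, EA, EB, EC.
  assert (Sset r (d (sel k g1 g2 g3 s) (sel j g1 g2 g3 t) -
      sqrt (Ef k (s / d (sel k x y z) (sel (nxt k) x y z)) j (t / d (sel j x y z) (sel (nxt j) x y z))
        (d x y) (d y z) (d z x)))).
  { right. exists c, x, y, z, g1, g2, g3, k, s, j, t. exact (conj Hx (conj Hy (conj Hz (conj H1 (conj H2 (conj H3 (conj Hs (conj Ht eq_refl)))))))). }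
  pose proof (proj1 (fS_lub r) _ H). lra.
Qed.

Lemma fS_small : (forall eps, 0 < eps -> exists R0, forall r, R0 < r -> forall c, ball_dCAT0 d c r (eps * r)) ->
  forall eps, 0 < eps -> exists R0, forall r, R0 < r -> Rabs (fS r / r) < eps.
Proof.
  intros L eps He. destruct (L (eps / 2) ltac:(lra)) as [R0 HR0].
  exists (Rmax R0 0). intros r Hr.
  assert (Hr0 : 0 < r) by (pose proof (Rmax_r R0 0); lra).
  assert (Hr1 : R0 < r) by (pose proof (Rmax_l R0 0); lra).
  assert (Hle : fS r <= eps / 2 * r).
  { apply (proj2 (fS_lub r)). intros del [->|H].
    - nra.
    - destruct H as [c [x [y [z [g1 [g2 [g3 [k [s [j [t [Hx [Hy [Hz [H1 [H2 [H3 [Hs [Ht ->]]]]]]]]]]]]]]]]]]].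
      pose proof (Xcat X d Hm c r (eps / 2 * r) x y z g1 g2 g3 k j s t (HR0 r Hr1 c) Hx Hy Hz H1 H2 H3 Hs Ht).
      lra. }
  pose proof (fS_nonneg r).
  rewrite Rabs_right. apply Rle_lt_trans with (eps / 2). 
  apply Rmult_le_reg_r with r; auto. unfold Rdiv at 1. rewrite Rmult_assoc, Rinv_l by lra. lra. lra.
  apply Rle_ge. unfold Rdiv. apply Rmult_le_pos; auto. left; apply Rinv_0_lt_compat; auto.
Qed.
End Step2.

Record Bad (X : Type) : Type := mkBad {
  br : R; bc : X; bx : X; by' : X; bz : X; bg1 : R -> X; bg2 : R -> X; bg3 : R -> X;
  bk : nat; bs : R; bj : nat; bt : R }.
Arguments br {X}. Arguments bc {X}. Arguments bx {X}. Arguments by' {X}. Arguments bz {X}.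
Arguments bg1 {X}. Arguments bg2 {X}. Arguments bg3 {X}. Arguments bk {X}. Arguments bs {X}.
Arguments bj {X}. Arguments bt {X}.

Definition good {X : Type} (d : X -> X -> R) (eps : R) (n : nat) (B : Bad X) : Prop :=
  INR n < br B /\ d (bc B) (bx B) <= br B /\ d (bc B) (by' B) <= br B /\ d (bc B) (bz B) <= br B /\
  geodesic_seg d (bx B) (by' B) (bg1 B) /\ geodesic_seg d (by' B) (bz B) (bg2 B) /\
  geodesic_seg d (bz B) (bx B) (bg3 B) /\ (bk B < 3)%nat /\ (bj B < 3)%nat /\
  0 <= bs B <= d (sel (bk B) (bx B) (by' B) (bz B)) (sel (nxt (bk B)) (bx B) (by' B) (bz B)) /\
  0 <= bt B <= d (sel (bj B) (bx B) (by' B) (bz B)) (sel (nxt (bj B)) (bx B) (by' B) (bz B)) /\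
  sqrt (Ef (bk B) (bs B / d (sel (bk B) (bx B) (by' B) (bz B)) (sel (nxt (bk B)) (bx B) (by' B) (bz B)))
           (bj B) (bt B / d (sel (bj B) (bx B) (by' B) (bz B)) (sel (nxt (bj B)) (bx B) (by' B) (bz B)))
           (d (bx B) (by' B)) (d (by' B) (bz B)) (d (bz B) (bx B))) + eps * br B
  < d (sel (bk B) (bg1 B) (bg2 B) (bg3 B) (bs B)) (sel (bj B) (bg1 B) (bg2 B) (bg3 B) (bt B)).

Lemma U_split3 U (HU : ultrafilter U) (h : nat -> nat) : (forall n, (h n < 3)%nat) ->
  exists K, (K < 3)%nat /\ U (fun n => h n = K).
Proof.
  intros H.
  assert (H0 : U (fun n => h n = 0%nat \/ (h n = 1%nat \/ h n = 2%nat))).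
  { apply U_true; auto. intros n. specialize (H n). lia. }
  destruct (U_or U HU _ _ H0) as [H1|H1]. exists 0%nat; split; auto.
  destruct (U_or U HU _ _ H1) as [H2|H2]. exists 1%nat; split; auto. exists 2%nat; split; auto.
Qed.

Lemma sel_LG {A B : Type} k u0 u1 u2 (G0 G1 G2 : nat -> R -> A) s
  (LGf : (nat -> A) -> (nat -> A) -> (nat -> R -> A) -> R -> B) :
  sel k (LGf u0 u1 G0) (LGf u1 u2 G1) (LGf u2 u0 G2) s =
  LGf (sel k u0 u1 u2) (sel (nxt k) u0 u1 u2) (sel k G0 G1 G2) s.
Proof. destruct k as [|[|k]]; reflexivity. Qed.

Section Contra.
Variables (X : Type) (d : X -> X -> R) (Hm : is_metric d) (U : (nat -> Prop) -> Prop)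
  (HU : ultrafilter U) (HNP : nonprincipal U) (F : nat -> Bad X) (eps : R) (He : 0 < eps)
  (HF : forall n, good d eps n (F n)) (K J : nat) (HK : (K < 3)%nat) (HJ : (J < 3)%nat)
  (UK : U (fun n => bk (F n) = K)) (UJ : U (fun n => bj (F n) = J)).

Definition ca n := br (F n).
Definition ce n := bc (F n).

Lemma Ha_c : tends_to_infinity ca.
Proof.
  intros M. destruct (INR_unbounded M) as [N HN]. exists N. intros n Hn.
  destruct (HF n) as [H _]. unfold ca. apply le_INR in Hn. lra.
Qed.

Hypothesis HC : CAT0 (@cone_dist X d U ca ce).

Notation adm := (cone_admissible d U ca ce).
Notation rpd := (rpd X d U ca).
Notation LG := (LG X d U ca ce Hm HU).
Notation LGs := (LGs X d ca).
Notation mkr := (mkr X d U ca ce Hm HU).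
Notation CD := (@cone_dist X d U ca ce).
Let Ha := Ha_c.
Let Ladm := LGs_adm X d U ca ce Hm HU HNP Ha.
Let Lrpd := rpd_lim X d U ca ce Hm HU HNP Ha.
Let Lcdm := cone_dist_mkr X d U ca ce Hm HU HNP Ha.
Let LUa1 := Ua1 U ca HU HNP Ha.
Let Lmet := cone_metric X d U ca ce Hm HU HNP Ha.
Let LLG_geo := LG_geo X d U ca ce Hm HU HNP Ha.
Let Lnear := LGs_near X d U ca ce Hm HU HNP Ha.

Definition u0 n := bx (F n).
Definition u1 n := by' (F n).
Definition u2 n := bz (F n).
Definition G0 n := bg1 (F n).
Definition G1 n := bg2 (F n).
Definition G2 n := bg3 (F n).

Lemma HG0 n : geodesic_seg d (u0 n) (u1 n) (G0 n). Proof. apply (HF n). Qed.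
Lemma HG1 n : geodesic_seg d (u1 n) (u2 n) (G1 n). Proof. apply (HF n). Qed.
Lemma HG2 n : geodesic_seg d (u2 n) (u0 n) (G2 n). Proof. apply (HF n). Qed.

Lemma near_e (w : nat -> X) : (forall n, d (ce n) (w n) <= ca n) -> adm w.
Proof.
  intros H. exists 1. apply U_true; auto. intros n. rewrite (dsym X d Hm). specialize (H n). lra.
Qed.
Lemma A0 : adm u0. Proof. apply near_e. intros n. apply (HF n). Qed.
Lemma A1 : adm u1. Proof. apply near_e. intros n. apply (HF n). Qed.
Lemma A2 : adm u2. Proof. apply near_e. intros n. apply (HF n). Qed.

Lemma sel_near k n : d (ce n) (sel k u0 u1 u2 n) <= ca n.
Proof. rewrite sel_app. apply sel_prop; apply (HF n). Qed.

Lemma sel_geo_seq k n : geodesic_seg d (sel k u0 u1 u2 n) (sel (nxt k) u0 u1 u2 n) (sel k G0 G1 G2 n).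
Proof. rewrite !sel_app. apply sel_geo; [apply HG0|apply HG1|apply HG2]. Qed.

Section Side.
Variables (k : nat) (bsel : Bad X -> nat) (bpar : Bad X -> R).
Hypothesis Uk : U (fun n => bsel (F n) = k).
Hypothesis Hpar : forall n, 0 <= bpar (F n) <= d (sel (bsel (F n)) (bx (F n)) (by' (F n)) (bz (F n)))
   (sel (nxt (bsel (F n))) (bx (F n)) (by' (F n)) (bz (F n))).

Definition vv := sel k u0 u1 u2.
Definition ww := sel (nxt k) u0 u1 u2.
Definition gg := sel k G0 G1 G2.
Definition sq n := bpar (F n).
Definition lam n := sq n / d (vv n) (ww n).
Definition pseq n := gg n (sq n).

Lemma Avv : adm vv. Proof. apply near_e. intros; apply sel_near. Qed.
Lemma Aww : adm ww. Proof. apply near_e. intros; apply sel_near. Qed.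
Lemma Hgg n : geodesic_seg d (vv n) (ww n) (gg n). Proof. apply sel_geo_seq. Qed.

Lemma sq_range : U (fun n => 0 <= sq n <= d (vv n) (ww n)).
Proof.
  eapply (U_mono U HU); [|exact Uk]. intros n Hn. unfold sq, vv, ww. rewrite !sel_app.
  unfold u0, u1, u2. rewrite <- Hn. apply Hpar.
Qed.

Lemma lam_bound : U (fun n => Rabs (lam n) <= 1).
Proof.
  eapply (U_mono U HU); [|exact sq_range]. intros n Hn. unfold lam.
  destruct (Req_dec (d (vv n) (ww n)) 0) as [E|E].
  - rewrite E. unfold Rdiv. rewrite Rinv_0, Rmult_0_r, Rabs_R0. lra.
  - assert (0 < d (vv n) (ww n)) by (pose proof (dpos X d Hm (vv n) (ww n)); lra).
    rewrite Rabs_right. apply Rmult_le_reg_r with (d (vv n) (ww n)); auto.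
    unfold Rdiv. rewrite Rmult_assoc, Rinv_l by lra. lra.
    apply Rle_ge. unfold Rdiv. apply Rmult_le_pos. lra. left; apply Rinv_0_lt_compat; auto.
Qed.

Definition lamL := ulim U lam.
Lemma lam_lim : is_ulim U lam lamL.
Proof. apply (ulim_spec U HU _ 1). apply lam_bound. Qed.

Definition sL := lamL * rpd vv ww.

Lemma sq_lim : is_ulim U (fun n => sq n / ca n) sL.
Proof.
  apply (is_ulim_ext U HU (fun n => lam n * (d (vv n) (ww n) / ca n))).
  - eapply (U_mono U HU); [|exact (U_inter U HU _ _ sq_range LUa1)]. intros n [Hs H1]. unfold lam.
    destruct (Req_dec (d (vv n) (ww n)) 0) as [E|E].
    + rewrite E in *. assert (sq n = 0) by lra. rewrite H. unfold Rdiv. ring.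
    + field. split; lra.
  - apply (is_ulim_mult U HU). apply lam_lim. apply Lrpd. apply Avv. apply Aww.
Qed.

Lemma near_facts : 0 <= sL <= rpd vv ww /\ rpd (LGs vv ww gg sL) pseq = 0.
Proof. apply (Lnear vv ww gg Avv Aww Hgg sq sL sq_range sq_lim). Qed.

Lemma Apseq : adm pseq.
Proof.
  apply (adm_near X d U ca ce Hm HU HNP Ha vv). apply Avv. exists 2.
  eapply (U_mono U HU); [|exact sq_range]. intros n Hn. unfold pseq.
  rewrite (geo_param X d Hm (vv n) (ww n)); auto using Hgg.
  pose proof (sel_near k n). pose proof (sel_near (nxt k) n).
  pose proof (dtri X d Hm (vv n) (ce n) (ww n)). rewrite (dsym X d Hm (vv n) (ce n)) in *.
  unfold vv, ww in *. lra.
Qed.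

Lemma side_eq : U (fun n => bsel (F n) = k /\
  sel (bsel (F n)) (bg1 (F n)) (bg2 (F n)) (bg3 (F n)) (bpar (F n)) = pseq n /\
  bpar (F n) / d (sel (bsel (F n)) (bx (F n)) (by' (F n)) (bz (F n)))
     (sel (nxt (bsel (F n))) (bx (F n)) (by' (F n)) (bz (F n))) = lam n).
Proof.
  eapply (U_mono U HU); [|exact Uk]. intros n Hn. rewrite Hn. split; auto.
  unfold pseq, gg, lam, vv, ww, sq. rewrite !sel_app. split; reflexivity.
Qed.

End Side.

Lemma rpd_tris : rpd u0 u1 <= rpd u1 u2 + rpd u2 u0 /\ rpd u1 u2 <= rpd u2 u0 + rpd u0 u1 /\
  rpd u2 u0 <= rpd u0 u1 + rpd u1 u2.
Proof.
  pose proof A0. pose proof A1. pose proof A2.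
  pose proof (rpd_tri X d U ca ce Hm HU HNP Ha u0 u2 u1 H H1 H0).
  pose proof (rpd_tri X d U ca ce Hm HU HNP Ha u1 u0 u2 H0 H H1).
  pose proof (rpd_tri X d U ca ce Hm HU HNP Ha u2 u1 u0 H1 H0 H).
  rewrite !(rpd_sym X d U ca Hm u2 u1), !(rpd_sym X d U ca Hm u1 u0), !(rpd_sym X d U ca Hm u0 u2) in *.
  lra.
Qed.

Lemma sel_rpd k : rpd (sel k u0 u1 u2) (sel (nxt k) u0 u1 u2) = sel k (rpd u0 u1) (rpd u1 u2) (rpd u2 u0).
Proof. destruct k as [|[|k]]; reflexivity. Qed.

Lemma contra : False.
Proof.
  assert (HparK : forall n, 0 <= bs (F n) <= d (sel (bk (F n)) (bx (F n)) (by' (F n)) (bz (F n)))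
   (sel (nxt (bk (F n))) (bx (F n)) (by' (F n)) (bz (F n)))).
  { intros n. destruct (HF n) as (_&_&_&_&_&_&_&_&_&H&_). exact H. }
  assert (HparJ : forall n, 0 <= bt (F n) <= d (sel (bj (F n)) (bx (F n)) (by' (F n)) (bz (F n)))
   (sel (nxt (bj (F n))) (bx (F n)) (by' (F n)) (bz (F n)))).
  { intros n. destruct (HF n) as (_&_&_&_&_&_&_&_&_&_&H&_). exact H. }
  destruct (near_facts K bk bs UK HparK) as [HsK EK].
  destruct (near_facts J bj bt UJ HparJ) as [HsJ EJ].
  set (sK := sL K bs). set (sJ := sL J bt). fold sK in HsK, EK. fold sJ in HsJ, EJ.
  set (m0 := mkr u0). set (m1 := mkr u1). set (m2 := mkr u2).
  assert (Hball : ball_dCAT0 CD m0 (CD m0 m0 + CD m0 m1 + CD m0 m2) 0).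
  { intros x y z h1 h2 h3 _ _ _ H1 H2 H3. apply (proj2 HC); auto. }
  pose proof (Xcat _ CD Lmet m0 (CD m0 m0 + CD m0 m1 + CD m0 m2) 0 m0 m1 m2
    (LG u0 u1 G0) (LG u1 u2 G1) (LG u2 u0 G2) K J sK sJ Hball) as Hx.
  pose proof (proj1 Lmet m0 m0). pose proof (proj1 Lmet m0 m1). pose proof (proj1 Lmet m0 m2).
  assert (Hg0 : geodesic_seg CD m0 m1 (LG u0 u1 G0)) by (apply LLG_geo; auto using A0, A1, HG0).
  assert (Hg1 : geodesic_seg CD m1 m2 (LG u1 u2 G1)) by (apply LLG_geo; auto using A1, A2, HG1).
  assert (Hg2 : geodesic_seg CD m2 m0 (LG u2 u0 G2)) by (apply LLG_geo; auto using A2, A0, HG2).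
  assert (Asel : forall k, adm (sel k u0 u1 u2)) by (intros k; apply sel_prop; auto using A0, A1, A2).
  assert (RK : 0 <= sK <= CD (sel K m0 m1 m2) (sel (nxt K) m0 m1 m2)).
  { unfold m0, m1, m2. rewrite !(sel_map mkr), Lcdm by auto. exact HsK. }
  assert (RJ : 0 <= sJ <= CD (sel J m0 m1 m2) (sel (nxt J) m0 m1 m2)).
  { unfold m0, m1, m2. rewrite !(sel_map mkr), Lcdm by auto. exact HsJ. }
  specialize (Hx ltac:(lra) ltac:(lra) ltac:(lra) Hg0 Hg1 Hg2 RK RJ).
  unfold m0, m1, m2 in Hx. rewrite !(sel_map mkr) in Hx.
  repeat rewrite Lcdm in Hx by (auto using A0, A1, A2).
  rewrite (sel_LG K u0 u1 u2 G0 G1 G2 sK LG), (sel_LG J u0 u1 u2 G0 G1 G2 sJ LG) in Hx.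
  change (sel K u0 u1 u2) with (vv K) in Hx. change (sel (nxt K) u0 u1 u2) with (ww K) in Hx.
  change (sel J u0 u1 u2) with (vv J) in Hx. change (sel (nxt J) u0 u1 u2) with (ww J) in Hx.
  change (sel K G0 G1 G2) with (gg K) in Hx. change (sel J G0 G1 G2) with (gg J) in Hx.
  unfold Submission.LG in Hx.
  rewrite Lcdm in Hx by (apply Ladm; auto using Avv, Aww, Hgg).
  rewrite (rpd_congr X d U ca ce Hm HU HNP Ha _ _ _ _
     (Ladm _ _ _ (Avv K) (Aww K) (Hgg K) sK) (Apseq K bk bs UK HparK)
     (Ladm _ _ _ (Avv J) (Aww J) (Hgg J) sJ) (Apseq J bj bt UJ HparJ) EK EJ) in Hx.
  pose proof rpd_tris as [T1 [T2 T3]].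
  assert (P1 : Ef K (sK / rpd (vv K) (ww K)) J (sJ / rpd (vv J) (ww J)) (rpd u0 u1) (rpd u1 u2) (rpd u2 u0)
    = Ef K (lamL K bs) J (sJ / rpd (vv J) (ww J)) (rpd u0 u1) (rpd u1 u2) (rpd u2 u0)).
  { destruct (Req_dec (rpd (vv K) (ww K)) 0) as [E|E].
    - apply Ef_indep_l; auto. rewrite <- sel_rpd. exact E.
    - unfold sK, sL. f_equal. field. auto. }
  assert (P2 : Ef K (lamL K bs) J (sJ / rpd (vv J) (ww J)) (rpd u0 u1) (rpd u1 u2) (rpd u2 u0)
    = Ef K (lamL K bs) J (lamL J bt) (rpd u0 u1) (rpd u1 u2) (rpd u2 u0)).
  { destruct (Req_dec (rpd (vv J) (ww J)) 0) as [E|E].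
    - apply Ef_indep_m; auto. rewrite <- sel_rpd. exact E.
    - unfold sJ, sL. f_equal. field. auto. }
  rewrite P1, P2 in Hx.
  assert (Low : sqrt (Ef K (lamL K bs) J (lamL J bt) (rpd u0 u1) (rpd u1 u2) (rpd u2 u0)) + eps
    <= rpd (pseq K bs) (pseq J bt)).
  { eapply (is_ulim_le U HU (fun n => sqrt (Ef K (lam K bs n) J (lam J bt n) (d (u0 n) (u1 n) / ca n)
       (d (u1 n) (u2 n) / ca n) (d (u2 n) (u0 n) / ca n)) + eps)
       (fun n => d (pseq K bs n) (pseq J bt n) / ca n)).
    - eapply (U_mono U HU); [| exact (U_inter U HU _ _ (side_eq K bk bs UK)
          (U_inter U HU _ _ (side_eq J bj bt UJ) LUa1))].
      intros n [[E1 [E2 E3]] [[E4 [E5 E6]] Hn]].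
      destruct (HF n) as (_&_&_&_&_&_&_&_&_&_&_&Hbad).
      rewrite E2, E5, E3, E6 in Hbad. rewrite E1, E4 in Hbad.
      change (bx (F n)) with (u0 n) in Hbad. change (by' (F n)) with (u1 n) in Hbad.
      change (bz (F n)) with (u2 n) in Hbad. change (br (F n)) with (ca n) in Hbad.
      rewrite Ef_scale by lra. rewrite sqrt_scale by lra.
      set (E := sqrt (Ef K (lam K bs n) J (lam J bt n) (d (u0 n) (u1 n)) (d (u1 n) (u2 n)) (d (u2 n) (u0 n)))) in *.
      replace (E / ca n + eps) with ((E + eps * ca n) * / ca n) by (field; lra).
      unfold Rdiv. apply Rmult_le_compat_r. left; apply Rinv_0_lt_compat; lra. lra.
    - apply (is_ulim_plus U HU); [|apply (is_ulim_const U HU)].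
      apply (is_ulim_sqrt U HU). apply is_ulim_Ef; auto.
      + apply (lam_lim K bk bs UK HparK).
      + apply (lam_lim J bj bt UJ HparJ).
      + apply Lrpd; auto using A0, A1.
      + apply Lrpd; auto using A1, A2.
      + apply Lrpd; auto using A2, A0.
    - apply Lrpd; [apply (Apseq K bk bs UK HparK) | apply (Apseq J bj bt UJ HparJ)]. }
  lra.
Qed.
End Contra.

Lemma stepL (X : Type) (d : X -> X -> R) (Hgeo : geodesic_space d) (HA : asymp_CAT0 d) :
  forall eps, 0 < eps -> exists R0, forall r, R0 < r -> forall c, ball_dCAT0 d c r (eps * r).
Proof.
  intros eps He. apply NNPP; intro Hn.
  assert (Hb : forall n, exists B, good d eps n B).
  { intros n. apply NNPP; intro Hno. apply Hn. exists (INR n). intros r Hr c.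
    intros x y z g1 g2 g3 Hx Hy Hz H1 H2 H3 A B C EA EB EC p pb q qb Hp Hq.
    destruct (side_of_on_tri _ _ _ _ _ _ _ _ _ _ _ _ Hp) as [k [Hk [s [Hs [-> ->]]]]].
    destruct (side_of_on_tri _ _ _ _ _ _ _ _ _ _ _ _ Hq) as [j [Hj [t [Ht [-> ->]]]]].
    rewrite euclid_dist, EA, EB, EC.
    apply Rnot_lt_le; intro Hlt. apply Hno.
    exists (mkBad X r c x y z g1 g2 g3 k s j t). unfold good; simpl.
    exact (conj Hr (conj Hx (conj Hy (conj Hz (conj H1 (conj H2 (conj H3 (conj Hk (conj Hj
      (conj Hs (conj Ht Hlt))))))))))). }
  destruct exists_ultrafilter as [U [HU HNP]].
  set (F := fun n => proj1_sig (constructive_indefinite_description _ (Hb n))).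
  assert (HF : forall n, good d eps n (F n)).
  { intros n. unfold F. destruct (constructive_indefinite_description _ (Hb n)) as [B HB]. exact HB. }
  destruct (U_split3 U HU (fun n => bk (F n))) as [K [HK UK]].
  { intros n. destruct (HF n) as (_&_&_&_&_&_&_&H&_). exact H. }
  destruct (U_split3 U HU (fun n => bj (F n))) as [J [HJ UJ]].
  { intros n. destruct (HF n) as (_&_&_&_&_&_&_&_&H&_). exact H. }
  apply (contra X d (proj1 Hgeo) U HU HNP F eps He HF K J UK UJ).
  apply HA; auto. apply (Ha_c X d F eps HF).
Qed.

Theorem theorem3p3 (X : Type) (d : X -> X -> R) (Hgeo : geodesic_space d) :
  asymp_CAT0 d <->
  exists f : R -> R,
    (forall r, 0 <= r -> 0 <= f r) /\
    (forall eps, 0 < eps -> exists R0, forall r, R0 < r -> Rabs (f r / r) < eps) /\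
    (forall r, 0 < r -> forall c : X, ball_dCAT0 d c r (f r)).
Proof.
  split.
  - intros HA. exists (fS X d (proj1 Hgeo)). split; [|split].
    + intros r _. apply fS_nonneg.
    + apply fS_small. apply stepL; auto.
    + intros r _ c. apply fS_ball.
  - intros [f [Hf0 [Hf1 Hf2]]]. intros U HU HNP a Ha e.
    apply (cone_CAT0 X d Hgeo f Hf1 Hf2 U a e HU HNP Ha).
Qed.
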